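(* Let $M\ge1$ and $q\in[q_G,M+1]$. The sequence $\alpha(q)$ is irreducible if and only if $q\notin(q_L(\mathbf b),q_R(\mathbf b)]$ for every fundamental word $\mathbf b\in\mathcal A_M$.
   Context: Order and word operations. $\Omega_M=\{0,\dots,M\}^{\mathbb N}$, with lexicographic order; words are compared via $\mathbf c\prec\mathbf d$ iff $\mathbf c0^\infty\prec\mathbf d0^\infty$. $\sigma$ is the left shift. For a word $c_1\dots c_k$: - if $c_k<M$, then $c_1\dots c_k^+=c_1\dots c_{k-1}(c_k+1)$; - if $c_k>0$, then $c_1\dots c_k^-=c_1\dots c_{k-1}(c_k-1)$; - $\overline{c_1\dots c_k}=(M-c_1)\dots(M-c_k)$, and $\overline{(c_i)}=(M-c_i)$ for sequences. Quasi-greedy expansion. For $q\in(1,M+1]$, $\alpha(q)$ is the lexicographically largest $(a_i)\in\Omega_M$ not ending in $0^\infty$ with $\sum a_iq^{-i}=1$. Irreducible sequences. Let $\mathbf V=\{(c_i)\in\Omega_M:\overline{(c_i)}\preceq\sigma^n((c_i))\preceq(c_i)\ \forall n\ge0\}$. A sequence $(a_i)\in\mathbf V$ is irreducible if for every $j\in\mathbb N$: whenever $a_j>0$ and $(a_1\dots a_j^-)^\infty\in\mathbf V$, we have $a_1\dots a_j(\overline{a_1\dots a_j}^+)^\infty\prec(a_i)$. (In particular, an irreducible sequence lies in $\mathbf V$.) Fundamental words. A word $a_1\dots a_m$ ($m\ge2$) is fundamental if $\overline{a_1\dots a_{m-i}}\preceq a_{i+1}\dots a_m\prec a_1\dots a_{m-i}$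 for $1\le i<m$. When $M\ge2$, a letter $a_1$ is fundamental if $M-a_1\le a_1<M$. $\mathcal A_M$ denotes the set of fundamental words. For $\mathbf b\in\mathcal A_M$, $q_L(\mathbf b),q_R(\mathbf b)$ are given by $\alpha(q_L(\mathbf b))=\mathbf b^\infty$ and $\alpha(q_R(\mathbf b))=\mathbf b^+(\overline{\mathbf b})^\infty$. The base $q_G$. It is defined by $\alpha(q_G)=k^\infty$ if $M=2k$, and $\alpha(q_G)=((k+1)k)^\infty$ if $M=2k+1$. *)

(* Defs.v *)
From Stdlib Require Import Reals Lra Lia Arith List.
Import ListNotations.
Open Scope R_scope.

(* A sequence (c_i)_{i>=1} is represented by c : nat -> nat with c n = c_{n+1}. *)
Definition in_Omega (M : nat) (c : nat -> nat) : Prop := forall i, (c i <= M)%nat.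

Definition lex_lt (c d : nat -> nat) : Prop :=
  exists n, (forall i, (i < n)%nat -> c i = d i) /\ (c n < d n)%nat.
Definition lex_le (c d : nat -> nat) : Prop := lex_lt c d \/ (forall i, c i = d i).

Definition shiftn (n : nat) (c : nat -> nat) : nat -> nat := fun i => c (n + i)%nat.
Definition flip (M : nat) (c : nat -> nat) : nat -> nat := fun i => (M - c i)%nat.

Definition ends_in_zero (c : nat -> nat) : Prop :=
  exists N, forall i, (N <= i)%nat -> c i = 0%nat.

(* a = alpha(q): the quasi-greedy expansion of 1 in base q, q in (1, M+1] *)
Definition is_alpha (M : nat) (q : R) (a : nat -> nat) : Prop :=
  1 < q <= INR M + 1 /\
  in_Omega M a /\ ~ ends_in_zero a /\
  infinite_sum (fun i => INR (a i) / q ^ (S i)) 1 /\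
  (forall b, in_Omega M b -> ~ ends_in_zero b ->
     infinite_sum (fun i => INR (b i) / q ^ (S i)) 1 -> lex_le b a).

Definition word_seq (w : list nat) : nat -> nat := fun i => nth i w 0%nat.  (* w 0^oo *)
Definition word_lt (w v : list nat) : Prop := lex_lt (word_seq w) (word_seq v).
Definition word_le (w v : list nat) : Prop := lex_le (word_seq w) (word_seq v).
Definition wflip (M : nat) (w : list nat) : list nat := map (fun x => (M - x)%nat) w.
(* w^+ and w^- (only used where last letter < M, resp. > 0) *)
Definition wplus (w : list nat) : list nat := removelast w ++ [S (last w 0%nat)].
Definition wminus (w : list nat) : list nat := removelast w ++ [pred (last w 0%nat)].
Definition periodic (w : list nat) : nat -> nat :=
  fun i => nth (i mod length w) w 0%nat.
Definition word_then_periodic (u w : list nat) : nat -> nat :=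
  fun i => if (i <? length u)%nat then nth i u 0%nat
           else nth ((i - length u) mod length w) w 0%nat.
Definition prefix (a : nat -> nat) (j : nat) : list nat := map a (seq 0 j).

Definition in_V (M : nat) (c : nat -> nat) : Prop :=
  in_Omega M c /\
  forall n, lex_le (flip M c) (shiftn n c) /\ lex_le (shiftn n c) c.

Definition irreducible (M : nat) (a : nat -> nat) : Prop :=
  in_V M a /\
  forall j, (1 <= j)%nat -> (0 < a (j - 1)%nat)%nat ->
    in_V M (periodic (wminus (prefix a j))) ->
    lex_lt (word_then_periodic (prefix a j) (wplus (wflip M (prefix a j)))) a.

Definition fundamental (M : nat) (w : list nat) : Prop :=
  Forall (fun x => (x <= M)%nat) w /\
  ( ((2 <= length w)%nat /\
     forall i, (1 <= i < length w)%nat ->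
       word_le (wflip M (firstn (length w - i) w)) (skipn i w) /\
       word_lt (skipn i w) (firstn (length w - i) w))
  \/ ((2 <= M)%nat /\ exists a1, w = [a1] /\ (M - a1 <= a1 < M)%nat) ).

Definition qG_seq (M : nat) : nat -> nat :=
  if Nat.even M then fun _ => (M / 2)%nat
  else fun i => if Nat.even i then (M / 2 + 1)%nat else (M / 2)%nat.

(* Main.v *)
Require Import Defs.
From Stdlib Require Import Reals Lra Lia Arith List Classical ZArith FunctionalExtensionality.
Import ListNotations.
Close Scope R_scope.

Definition eqs (c d : nat -> nat) : Prop := forall i, c i = d i.
Definition agree (c d : nat -> nat) (k : nat) : Prop := forall i, (i < k)%nat -> c i = d i.
Definition pre_lt (c d : nat -> nat) (k : nat) : Prop :=
  exists p, (p < k)%nat /\ (forall t, (t < p)%nat -> c t = d t) /\ (c p < d p)%nat.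

Lemma min_witness (P : nat -> Prop) : (exists n, P n) -> exists n, P n /\ forall m, (m < n)%nat -> ~ P m.
Proof.
  intros [n Hn]. revert Hn. induction n as [n IH] using lt_wf_ind. intros Hn.
  destruct (classic (exists m, (m < n)%nat /\ P m)) as [[m [Hm1 Hm2]]|H].
  - apply (IH m Hm1 Hm2).
  - exists n. split; auto. intros m Hm Pm. apply H. eauto.
Qed.

Lemma lex_lt_irrefl c : ~ lex_lt c c.
Proof. intros [n [_ H]]. lia. Qed.

Lemma lex_lt_trans c d e : lex_lt c d -> lex_lt d e -> lex_lt c e.
Proof.
  intros [n [H1 H2]] [m [H3 H4]].
  destruct (lt_eq_lt_dec n m) as [[Hlt|Heq]|Hgt].
  - exists n. split. intros i Hi. rewrite H1 by lia. apply H3; lia. rewrite <- (H3 n) by lia. lia.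
  - subst. exists m. split. intros i Hi. rewrite H1 by lia. apply H3; lia. lia.
  - exists m. split. intros i Hi. rewrite H1 by lia. apply H3; lia. rewrite (H1 m) by lia. lia.
Qed.

Lemma lex_lt_ext c d c' d' : eqs c c' -> eqs d d' -> lex_lt c d -> lex_lt c' d'.
Proof.
  intros E1 E2 [n [H1 H2]]. exists n. split.
  intros i Hi. rewrite <- E1, <- E2. auto. rewrite <- E1, <- E2. auto.
Qed.

Lemma lex_le_ext c d c' d' : eqs c c' -> eqs d d' -> lex_le c d -> lex_le c' d'.
Proof.
  intros E1 E2 [H|H]. left. eapply lex_lt_ext; eauto.
  right. intros i. rewrite <- E1, <- E2. auto.
Qed.

Lemma lex_le_refl c : lex_le c c.
Proof. right. auto. Qed.

Lemma lex_le_lt_trans c d e : lex_le c d -> lex_lt d e -> lex_lt c e.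
Proof.
  intros [H|H] H2. eapply lex_lt_trans; eauto.
  eapply lex_lt_ext; [| |exact H2]. intros i; auto. intro; auto.
Qed.

Lemma lex_lt_le_trans c d e : lex_lt c d -> lex_le d e -> lex_lt c e.
Proof.
  intros H [H2|H2]. eapply lex_lt_trans; eauto.
  eapply lex_lt_ext; [| |exact H]. intro; auto. intro; auto.
Qed.

Lemma lex_le_trans c d e : lex_le c d -> lex_le d e -> lex_le c e.
Proof.
  intros [H|H] H2. left. eapply lex_lt_le_trans; eauto.
  destruct H2 as [H2|H2]. left. eapply lex_le_lt_trans; eauto. right; auto.
  right. intros i. rewrite H. auto.
Qed.

Lemma lex_lt_not_le c d : lex_lt c d -> ~ lex_le d c.
Proof. intros H H2. apply (lex_lt_irrefl c). eapply lex_lt_le_trans; eauto. Qed.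

Lemma lex_total c d : lex_lt c d \/ lex_le d c.
Proof.
  destruct (classic (exists n, c n <> d n)) as [H|H].
  - destruct (min_witness _ H) as [n [Hn Hmin]].
    assert (Ha : forall i, (i < n)%nat -> c i = d i).
    { intros i Hi. destruct (Nat.eq_dec (c i) (d i)); auto. exfalso; eapply Hmin; eauto. }
    destruct (lt_eq_lt_dec (c n) (d n)) as [[Hl|He]|Hg].
    + left. exists n. auto.
    + contradiction.
    + right. left. exists n. split; auto. intros i Hi; symmetry; auto.
  - right. right. intros i. destruct (Nat.eq_dec (d i) (c i)); auto. exfalso; apply H; exists i; auto.
Qed.

Lemma not_lt_le c d : ~ lex_lt c d -> lex_le d c.
Proof. intros H. destruct (lex_total c d); tauto. Qed.

Lemma not_le_lt c d : ~ lex_le c d -> lex_lt d c.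
Proof. intros H. destruct (lex_total d c); tauto. Qed.

Lemma lex_le_antisym c d : lex_le c d -> lex_le d c -> eqs c d.
Proof.
  intros [H|H] H2. exfalso. eapply lex_lt_not_le; eauto. exact H.
Qed.

Lemma flip_lt M c d : in_Omega M c -> in_Omega M d -> lex_lt c d -> lex_lt (flip M d) (flip M c).
Proof.
  intros Hc Hd [n [H1 H2]]. exists n. unfold flip. split.
  intros i Hi. rewrite H1; auto. specialize (Hd n). lia.
Qed.

Lemma flip_le M c d : in_Omega M c -> in_Omega M d -> lex_le c d -> lex_le (flip M d) (flip M c).
Proof.
  intros Hc Hd [H|H]. left; apply flip_lt; auto. right. intros i; unfold flip; rewrite H; auto.
Qed.

Lemma flip_flip M c : in_Omega M c -> eqs (flip M (flip M c)) c.
Proof. intros Hc i. unfold flip. specialize (Hc i). lia. Qed.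

Lemma flip_Omega M c : in_Omega M (flip M c).
Proof. intros i. unfold flip. lia. Qed.

Lemma shift_Omega M c n : in_Omega M c -> in_Omega M (shiftn n c).
Proof. intros H i. apply H. Qed.

Lemma pre_lt_lex c d k : pre_lt c d k -> lex_lt c d.
Proof. intros [p [_ [H1 H2]]]. exists p. auto. Qed.

Lemma le_not_pre_lt c d k : lex_le c d -> ~ pre_lt d c k.
Proof. intros H H2. apply pre_lt_lex in H2. eapply lex_lt_not_le; eauto. Qed.

Lemma lex_lt_cases c d k : lex_lt c d -> pre_lt c d k \/ agree c d k.
Proof.
  intros [n [H1 H2]]. destruct (lt_dec n k). left. exists n; auto.
  right. intros i Hi. apply H1. lia.
Qed.

Lemma agree_shift_lt c d k : agree c d k -> lex_lt (shiftn k c) (shiftn k d) -> lex_lt c d.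
Proof.
  intros Ha [n [H1 H2]]. exists (k + n)%nat. unfold shiftn in *. split; auto.
  intros i Hi. destruct (lt_dec i k). apply Ha; auto.
  replace i with (k + (i - k))%nat by lia. apply H1. lia.
Qed.

Lemma agree_lt_shift c d k : agree c d k -> lex_lt c d -> lex_lt (shiftn k c) (shiftn k d).
Proof.
  intros Ha [n [H1 H2]].
  assert (k <= n)%nat.
  { destruct (le_lt_dec k n); auto. rewrite Ha in H2; auto. lia. }
  exists (n - k)%nat. unfold shiftn. split.
  intros i Hi. apply H1. lia. replace (k + (n - k))%nat with n by lia. auto.
Qed.

Lemma agree_shift_le c d k : agree c d k -> lex_le (shiftn k c) (shiftn k d) -> lex_le c d.
Proof.
  intros Ha [H|H]. left. eapply agree_shift_lt; eauto.
  right. intros i. destruct (lt_dec i k). apply Ha; auto.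
  replace i with (k + (i - k))%nat by lia. apply H.
Qed.

Lemma agree_le_shift c d k : agree c d k -> lex_le c d -> lex_le (shiftn k c) (shiftn k d).
Proof.
  intros Ha [H|H]. left. eapply agree_lt_shift; eauto. right. intros i. apply H.
Qed.

Lemma shiftn_shiftn n m c : eqs (shiftn n (shiftn m c)) (shiftn (m + n) c).
Proof. intros i. unfold shiftn. f_equal. lia. Qed.

Lemma per_mod n (c : nat -> nat) : (1 <= n)%nat -> (forall i, c (i + n)%nat = c i) -> forall i, c i = c (i mod n).
Proof.
  intros Hn Hp.
  assert (H : forall k r, c (k * n + r)%nat = c r).
  { induction k; intros r. simpl. auto. replace (S k * n + r)%nat with ((k * n + r) + n)%nat by lia.
    rewrite Hp. auto. }
  intros i. rewrite (Nat.div_mod_eq i n) at 1. rewrite Nat.mul_comm. apply H.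
Qed.

Lemma per_shift_eq n (c : nat -> nat) i : (1 <= n)%nat -> (forall i, c (i + n)%nat = c i) ->
  eqs (shiftn i c) (shiftn (i mod n) c).
Proof.
  intros Hn Hp s. unfold shiftn. rewrite (per_mod n c Hn Hp (i + s)).
  rewrite (per_mod n c Hn Hp (i mod n + s)). f_equal.
  rewrite Nat.Div0.add_mod_idemp_l. auto.
Qed.

Lemma per_lower M n c : (1 <= n)%nat -> in_Omega M c -> (forall i, c (i + n)%nat = c i) ->
  (forall i, (i < n)%nat -> ~ pre_lt (shiftn i c) (flip M c) (n - i)) ->
  forall i, lex_le (flip M c) (shiftn i c).
Proof.
  intros Hn Hc Hp W.
  assert (K : forall p i, ~ ((forall t, (t < p)%nat -> c (i + t)%nat = (M - c t)%nat) /\ (c (i + p) < M - c p)%nat)).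
  { induction p as [p IH] using lt_wf_ind. intros i [H1 H2].
    set (r := (i mod n)%nat).
    assert (Hr : (r < n)%nat) by (apply Nat.mod_upper_bound; lia).
    assert (E : forall s, c (i + s)%nat = c (r + s)%nat).
    { intros s. apply (per_shift_eq n c i Hn Hp s). }
    destruct (lt_dec p (n - r)) as [Hlt|Hge].
    - apply (W r Hr). exists p. unfold shiftn, flip. split; auto. split.
      intros t Ht. rewrite <- E. auto. rewrite <- E. auto.
    - apply (IH (p - (n - r))%nat ltac:(lia) (n - r)%nat). split.
      + intros s Hs. assert (X := H1 (n - r + s)%nat ltac:(lia)).
        rewrite E in X. replace (r + (n - r + s))%nat with (s + n)%nat in X by lia.
        rewrite Hp in X. pose proof (Hc s). pose proof (Hc (n - r + s)%nat). lia.
      + rewrite E in H2. replace (r + p)%nat with ((p - (n - r)) + n)%nat in H2 by lia.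
        rewrite Hp in H2. replace (n - r + (p - (n - r)))%nat with p by lia.
        specialize (Hc p). lia. }
  intros i. apply not_lt_le. intros [p [H1 H2]]. apply (K p i). unfold shiftn, flip in *. auto.
Qed.

Lemma per_upper n (c : nat -> nat) : (1 <= n)%nat -> (forall i, c (i + n)%nat = c i) ->
  (forall i, (0 < i < n)%nat -> pre_lt (shiftn i c) c (n - i)) ->
  forall i, lex_le (shiftn i c) c.
Proof.
  intros Hn Hp W i.
  apply lex_le_ext with (shiftn (i mod n) c) c.
  intros s. symmetry. apply per_shift_eq; auto. intros s; auto.
  destruct (Nat.eq_dec (i mod n) 0) as [E|E].
  - right. rewrite E. intros s. reflexivity.
  - left. apply pre_lt_lex with (n - i mod n)%nat. apply W.
    split. lia. apply Nat.mod_upper_bound; lia.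
Qed.

Lemma prefix_len a j : length (prefix a j) = j.
Proof. unfold prefix. rewrite length_map, length_seq. auto. Qed.

Lemma prefix_nth a j i : (i < j)%nat -> nth i (prefix a j) 0%nat = a i.
Proof.
  intros H. unfold prefix. rewrite nth_indep with (d' := a 0%nat) by (rewrite length_map, length_seq; auto).
  rewrite map_nth. rewrite seq_nth; auto.
Qed.

Lemma last_nth_gen (w : list nat) d : w <> [] -> last w d = nth (length w - 1) w d.
Proof.
  induction w as [|x w IH]; intros H. congruence.
  destruct w as [|y w']. reflexivity.
  change (last (y :: w') d = nth (length (y :: w')) (x :: y :: w') d).
  rewrite IH by congruence. simpl. replace (length w' - 0)%nat with (length w') by lia. reflexivity.
Qed.

Lemma nth_app_last (l : list nat) x i : nth i (l ++ [x]) 0%nat =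
  if (i <? length l)%nat then nth i l 0%nat else if (i =? length l)%nat then x else 0%nat.
Proof.
  destruct (Nat.ltb_spec i (length l)). rewrite app_nth1; auto.
  rewrite app_nth2 by auto. destruct (Nat.eqb_spec i (length l)).
  subst. rewrite Nat.sub_diag. reflexivity.
  destruct (i - length l)%nat as [|k] eqn:E. lia. simpl. destruct k; reflexivity.
Qed.

Lemma wminus_nth w i : w <> [] -> nth i (wminus w) 0%nat =
  if (i =? length w - 1)%nat then pred (nth i w 0%nat) else nth i w 0%nat.
Proof.
  intros Hw. unfold wminus. rewrite removelast_firstn_len. rewrite nth_app_last.
  assert (Hl : length w <> 0%nat) by (destruct w; simpl; congruence).
  rewrite length_firstn. rewrite Nat.min_l by lia. rewrite last_nth_gen by auto.
  destruct (Nat.ltb_spec i (pred (length w))).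
  - rewrite nth_firstn. destruct (Nat.ltb_spec i (pred (length w))); try lia.
    destruct (Nat.eqb_spec i (length w - 1)); auto. lia.
  - destruct (Nat.eqb_spec i (pred (length w))); destruct (Nat.eqb_spec i (length w - 1)); try lia.
    subst. replace (pred (length w)) with (length w - 1)%nat by lia. auto.
    rewrite nth_overflow; auto. lia.
Qed.

Lemma wplus_nth w i : w <> [] -> nth i (wplus w) 0%nat =
  if (i =? length w - 1)%nat then S (nth i w 0%nat) else nth i w 0%nat.
Proof.
  intros Hw. unfold wplus. rewrite removelast_firstn_len. rewrite nth_app_last.
  assert (Hl : length w <> 0%nat) by (destruct w; simpl; congruence).
  rewrite length_firstn. rewrite Nat.min_l by lia. rewrite last_nth_gen by auto.
  destruct (Nat.ltb_spec i (pred (length w))).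
  - rewrite nth_firstn. destruct (Nat.ltb_spec i (pred (length w))); try lia.
    destruct (Nat.eqb_spec i (length w - 1)); auto. lia.
  - destruct (Nat.eqb_spec i (pred (length w))); destruct (Nat.eqb_spec i (length w - 1)); try lia.
    subst. replace (pred (length w)) with (length w - 1)%nat by lia. auto.
    rewrite nth_overflow; auto. lia.
Qed.

Lemma wminus_len w : w <> [] -> length (wminus w) = length w.
Proof.
  intros Hw. unfold wminus. rewrite length_app, removelast_firstn_len, length_firstn. simpl.
  assert (length w <> 0%nat) by (destruct w; simpl; congruence). lia.
Qed.

Lemma wplus_len w : w <> [] -> length (wplus w) = length w.
Proof.
  intros Hw. unfold wplus. rewrite length_app, removelast_firstn_len, length_firstn. simpl.
  assert (length w <> 0%nat) by (destruct w; simpl; congruence). lia.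
Qed.

Lemma wflip_len M w : length (wflip M w) = length w.
Proof. unfold wflip. apply length_map. Qed.

Lemma wflip_nth M w i : nth i (wflip M w) 0%nat = if (i <? length w)%nat then (M - nth i w 0)%nat else 0%nat.
Proof.
  unfold wflip. destruct (Nat.ltb_spec i (length w)).
  rewrite nth_indep with (d' := (fun x => (M - x)%nat) 0%nat) by (rewrite length_map; auto).
  rewrite map_nth. auto. rewrite nth_overflow; auto. rewrite length_map; auto.
Qed.

Lemma periodic_lt w i : (i < length w)%nat -> periodic w i = nth i w 0%nat.
Proof. intros H. unfold periodic. rewrite Nat.mod_small; auto. Qed.

Lemma periodic_per w i : (1 <= length w)%nat -> periodic w (i + length w) = periodic w i.
Proof.
  intros H. unfold periodic. f_equal. rewrite Nat.Div0.add_mod by lia. rewrite Nat.Div0.mod_same.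
  rewrite Nat.add_0_r. apply Nat.Div0.mod_mod.
Qed.

Lemma wtp_lt u w i : (i < length u)%nat -> word_then_periodic u w i = nth i u 0%nat.
Proof. intros H. unfold word_then_periodic. destruct (Nat.ltb_spec i (length u)); auto; lia. Qed.

Lemma wtp_ge u w i : word_then_periodic u w (length u + i) = periodic w i.
Proof.
  unfold word_then_periodic, periodic. destruct (Nat.ltb_spec (length u + i) (length u)). lia.
  f_equal. f_equal. lia.
Qed.

Lemma ws_skipn (b : list nat) i p : word_seq (skipn i b) p = nth (i + p) b 0%nat.
Proof. unfold word_seq. apply nth_skipn. Qed.

Lemma ws_firstn (b : list nat) k p : word_seq (firstn k b) p = if (p <? k)%nat then nth p b 0%nat else 0%nat.
Proof. unfold word_seq. apply nth_firstn. Qed.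

Lemma pre_transport c d c' d' k : agree c c' k -> agree d d' k -> pre_lt c d k -> pre_lt c' d' k.
Proof.
  intros H1 H2 [p [Hp [K1 K2]]]. exists p. split; auto. split.
  intros t Ht. rewrite <- H1, <- H2 by lia. auto. rewrite <- H1, <- H2 by lia. auto.
Qed.

Lemma pre_lt_mono c d k k' : (k <= k')%nat -> pre_lt c d k -> pre_lt c d k'.
Proof. intros H [p [Hp K]]. exists p. split; auto. lia. Qed.

Lemma lex_lt_pre c d k : lex_lt c d -> (forall p, (k <= p)%nat -> c p = d p) -> pre_lt c d k.
Proof.
  intros [n [H1 H2]] H. exists n. split; auto. destruct (lt_dec n k); auto. rewrite H in H2 by lia. lia.
Qed.

Lemma not_pre_le c d k : (forall p, (k <= p)%nat -> c p = d p) -> ~ pre_lt d c k -> lex_le c d.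
Proof.
  intros H H2. apply not_lt_le. intros L. apply H2. apply lex_lt_pre; auto. intros p Hp. symmetry; auto.
Qed.

Lemma squeeze x c y k : ~ pre_lt x c k -> ~ pre_lt y x k -> agree y c k -> agree x c k.
Proof.
  intros H1 H2 H3. assert (G : forall i, (i <= k)%nat -> agree x c i).
  { induction i; intros Hi. intros t Ht; lia.
    assert (IH := IHi ltac:(lia)). intros t Ht.
    destruct (Nat.eq_dec t i) as [->|E]; [|apply IH; lia].
    destruct (lt_eq_lt_dec (x i) (c i)) as [[L|L]|L]; auto.
    - exfalso. apply H1. exists i. split. lia. split; auto.
    - exfalso. apply H2. exists i. split. lia. split.
      intros s Hs. rewrite H3 by lia. symmetry; apply IH; auto. rewrite H3 by lia. auto. }
  apply G. lia.
Qed.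

Lemma pre_or_agree x y k : ~ pre_lt y x k -> ~ agree x y k -> pre_lt x y k.
Proof.
  intros H1 H2. assert (E : exists i, (i < k)%nat /\ x i <> y i).
  { apply NNPP. intros N. apply H2. intros i Hi. destruct (Nat.eq_dec (x i) (y i)); auto. exfalso; eauto. }
  destruct (min_witness _ E) as [i [[Hi Hne] Hmin]].
  assert (A : forall t, (t < i)%nat -> x t = y t).
  { intros t Ht. destruct (Nat.eq_dec (x t) (y t)); auto. exfalso. apply (Hmin t Ht). split; auto; lia. }
  destruct (lt_eq_lt_dec (x i) (y i)) as [[L|L]|L]. exists i; auto. contradiction.
  exfalso. apply H1. exists i. split; auto. split; auto. intros t Ht; symmetry; auto.
Qed.

Lemma in_V_ext M c d : eqs c d -> in_V M c -> in_V M d.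
Proof.
  intros E [H1 H2]. split. intros i; rewrite <- E; auto.
  intros n. destruct (H2 n) as [A B]. split.
  - eapply lex_le_ext; [| |exact A]. intros i; unfold flip; rewrite E; auto. intros i; unfold shiftn; rewrite E; auto.
  - eapply lex_le_ext; [| |exact B]. intros i; unfold shiftn; rewrite E; auto. auto.
Qed.

Lemma V_lower M c k n : in_V M c -> ~ pre_lt (shiftn n c) (flip M c) k.
Proof. intros [_ H]. apply le_not_pre_lt. apply H. Qed.

Lemma V_upper M c k n : in_V M c -> ~ pre_lt c (shiftn n c) k.
Proof. intros [_ H]. apply le_not_pre_lt. apply H. Qed.

Lemma per_Om M b : Forall (fun x => (x <= M)%nat) b -> in_Omega M (periodic b).
Proof.
  intros H i. unfold periodic. destruct (lt_dec (i mod length b) (length b)).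
  - rewrite Forall_forall in H. apply H. apply nth_In; auto.
  - rewrite nth_overflow by lia. lia.
Qed.

Lemma per_eq b i : (1 <= length b)%nat -> periodic b i = periodic b (i mod length b).
Proof. intros H. unfold periodic. rewrite Nat.Div0.mod_mod. auto. Qed.

Lemma per_plus b i : (1 <= length b)%nat -> periodic b (i + length b) = periodic b i.
Proof. apply periodic_per. Qed.

Lemma per_mul b k i : (1 <= length b)%nat -> periodic b (k * length b + i) = periodic b i.
Proof.
  intros H. induction k. reflexivity. replace (S k * length b + i)%nat with ((k * length b + i) + length b)%nat by lia.
  rewrite per_plus; auto.
Qed.

Lemma WA b i : agree (word_seq (skipn i b)) (shiftn i (periodic b)) (length b - i).
Proof. intros p Hp. rewrite ws_skipn. unfold shiftn. rewrite periodic_lt; auto. lia. Qed.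

Lemma WB M b i : (i <= length b)%nat -> agree (word_seq (wflip M (firstn (length b - i) b))) (flip M (periodic b)) (length b - i).
Proof.
  intros H p Hp. unfold word_seq. rewrite wflip_nth. rewrite length_firstn.
  destruct (Nat.ltb_spec p (Nat.min (length b - i) (length b))); [|lia].
  unfold flip. rewrite periodic_lt by lia. rewrite nth_firstn.
  destruct (Nat.ltb_spec p (length b - i)); auto; lia.
Qed.

Lemma WC b i : agree (word_seq (firstn (length b - i) b)) (periodic b) (length b - i).
Proof.
  intros p Hp. rewrite ws_firstn. destruct (Nat.ltb_spec p (length b - i)); [|lia].
  rewrite periodic_lt; auto. lia.
Qed.

Lemma WT1 b i p : (length b - i <= p)%nat -> word_seq (skipn i b) p = 0%nat.
Proof. intros H. rewrite ws_skipn. apply nth_overflow. lia. Qed.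

Lemma WT2 b i p : (length b - i <= p)%nat -> word_seq (firstn (length b - i) b) p = 0%nat.
Proof. intros H. rewrite ws_firstn. destruct (Nat.ltb_spec p (length b - i)); auto; lia. Qed.

Lemma WT3 M b i p : (length b - i <= p)%nat -> word_seq (wflip M (firstn (length b - i) b)) p = 0%nat.
Proof.
  intros H. unfold word_seq. rewrite wflip_nth. rewrite length_firstn.
  destruct (Nat.ltb_spec p (Nat.min (length b - i) (length b))); auto; lia.
Qed.

Lemma fund_props M b : fundamental M b ->
  (1 <= length b)%nat /\ in_V M (periodic b) /\ (nth (length b - 1) b 0 < M)%nat /\
  (forall i, (0 < i < length b)%nat -> pre_lt (shiftn i (periodic b)) (periodic b) (length b - i)).
Proof.
  intros [HF [[Hm H]|[HM [a1 [-> Ha1]]]]].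
  - set (c := periodic b).
    assert (Hc : in_Omega M c) by (apply per_Om; auto).
    assert (Lo : forall i, (1 <= i < (length b))%nat -> ~ pre_lt (shiftn i c) (flip M c) ((length b) - i)).
    { intros i Hi N. destruct (H i Hi) as [H1 _]. apply (le_not_pre_lt _ _ ((length b) - i) H1).
      eapply pre_transport; [| |exact N].
      intros p Hp. symmetry. apply WA; auto. intros p Hp. symmetry. apply WB; lia. }
    assert (Up : forall i, (0 < i < (length b))%nat -> pre_lt (shiftn i c) c ((length b) - i)).
    { intros i Hi. destruct (H i ltac:(lia)) as [_ H2].
      apply lex_lt_pre with (k := ((length b) - i)%nat) in H2.
      eapply pre_transport; [| |exact H2]. apply WA. apply WC.
      intros p Hp. rewrite WT1, WT2; auto. }
    assert (E1 : (M - c 0 <= c ((length b) - 1))%nat).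
    { destruct (le_lt_dec (M - c 0) (c ((length b) - 1))); auto. exfalso. apply (Lo ((length b) - 1)%nat ltac:(lia)).
      exists 0%nat. split. lia. split. intros; lia. unfold shiftn, flip. rewrite Nat.add_0_r. auto. }
    assert (E2 : (c ((length b) - 1) < c 0)%nat).
    { destruct (Up ((length b) - 1)%nat ltac:(lia)) as [p [Hp [_ K]]]. replace p with 0%nat in * by lia.
      unfold shiftn in K. rewrite Nat.add_0_r in K. auto. }
    split. lia. split.
    + split; auto. intros n. split.
      * apply (per_lower M (length b) c); auto. lia. intros i; apply per_plus; lia.
        intros i Hi. destruct (Nat.eq_dec i 0) as [->|Ne].
        -- intros [p [Hp [K1 K2]]]. unfold shiftn, flip in *. destruct p.
           simpl in K2. lia. specialize (K1 0%nat ltac:(lia)). simpl in K1. lia.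
        -- apply Lo. lia.
      * apply (per_upper (length b) c). lia. intros i; apply per_plus; lia. auto.
    + split. rewrite <- periodic_lt by lia. fold c. pose proof (Hc 0%nat). lia.
      auto.
  - simpl. split. lia.
    assert (Ec : forall i, periodic [a1] i = a1).
    { intros i. unfold periodic. simpl length. rewrite Nat.mod_1_r. reflexivity. }
    split. split. intros i; rewrite Ec; lia.
    intros n. split.
    + destruct (Nat.eq_dec (M - a1) a1) as [E|E].
      right. intros i. unfold flip, shiftn. rewrite !Ec. lia.
      left. exists 0%nat. split. intros; lia. unfold flip, shiftn. rewrite !Ec. lia.
    + right. intros i. unfold shiftn. rewrite !Ec. auto.
    + split. simpl. lia. intros i Hi. lia.
Qed.

Lemma nonempty_of_len (b : list nat) : (1 <= length b)%nat -> b <> [].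
Proof. destruct b; simpl; try congruence; lia. Qed.

Lemma comb_forward M a b : in_Omega M a -> (forall n, lex_le (shiftn n a) a) -> irreducible M a ->
  fundamental M b -> lex_lt (periodic b) a -> lex_le a (word_then_periodic (wplus b) (wflip M b)) -> False.
Proof.
  intros Ha Hs Hirr Hf Lc Lt.
  destruct (fund_props M b Hf) as [Hm [HV [Hlast _]]].
  pose proof (nonempty_of_len b Hm) as Hne.
  set (m := length b) in *. set (c := periodic b) in *.
  set (t := word_then_periodic (wplus b) (wflip M b)) in *.
  assert (Hc : in_Omega M c) by (destruct HV; auto).
  assert (T1 : forall i, (i < m - 1)%nat -> t i = c i).
  { intros i Hi. unfold t. rewrite wtp_lt by (rewrite wplus_len; auto; lia). rewrite wplus_nth by auto.
    fold m. destruct (Nat.eqb_spec i (m - 1)); try lia. unfold c. rewrite periodic_lt; auto. lia. }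
  assert (T2 : t (m - 1)%nat = S (c (m - 1)%nat)).
  { unfold t. rewrite wtp_lt by (rewrite wplus_len; auto; lia). rewrite wplus_nth by auto.
    fold m. rewrite Nat.eqb_refl. unfold c. rewrite periodic_lt; auto. lia. }
  assert (T3 : forall s, t (m + s)%nat = (M - c s)%nat).
  { intros s. unfold t. pose proof (wtp_ge (wplus b) (wflip M b) s) as W. rewrite wplus_len in W by auto.
    fold m in W. rewrite W. unfold periodic. rewrite wflip_nth. rewrite wflip_len. fold m.
    destruct (Nat.ltb_spec (s mod m) m). unfold c. unfold periodic. fold m. auto.
    pose proof (Nat.mod_upper_bound s m ltac:(lia)). lia. }
  assert (N1 : ~ pre_lt a c m) by (apply le_not_pre_lt; left; auto).
  assert (N2 : ~ pre_lt t a m) by (apply le_not_pre_lt; auto).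
  assert (Ag : agree a c (m - 1)).
  { apply (squeeze a c t). intros P; apply N1; eapply pre_lt_mono; [|exact P]; lia.
    intros P; apply N2; eapply pre_lt_mono; [|exact P]; lia. intros i Hi; apply T1; auto. }
  assert (G1 : (c (m - 1) <= a (m - 1))%nat).
  { destruct (le_lt_dec (c (m - 1)) (a (m - 1))); auto. exfalso. apply N1. exists (m - 1)%nat. split. lia. split; auto. }
  assert (G2 : (a (m - 1) <= S (c (m - 1)))%nat).
  { destruct (le_lt_dec (a (m - 1)) (S (c (m - 1)))); auto. exfalso. apply N2. exists (m - 1)%nat. split. lia.
    split. intros i Hi. rewrite T1 by auto. symmetry; apply Ag; auto. rewrite T2. auto. }
  assert (Cb : forall i, (i < m)%nat -> c i = nth i b 0%nat) by (intros i Hi; unfold c; apply periodic_lt; auto).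
  destruct (Nat.eq_dec (a (m - 1)) (S (c (m - 1)))) as [E|E].
  - (* a starts with b^+ *)
    destruct Hirr as [_ Hirr]. specialize (Hirr m ltac:(lia) ltac:(lia)).
    assert (Pn : prefix a m <> []) by (apply nonempty_of_len; rewrite prefix_len; lia).
    assert (Pa : forall i, (i < m)%nat -> a i = if (i =? m - 1)%nat then S (c i) else c i).
    { intros i Hi. destruct (Nat.eqb_spec i (m - 1)). subst; auto. apply Ag; lia. }
    assert (EV : eqs c (periodic (wminus (prefix a m)))).
    { intros i. unfold periodic. rewrite wminus_len by auto. rewrite prefix_len.
      pose proof (Nat.mod_upper_bound i m ltac:(lia)).
      rewrite wminus_nth by auto. rewrite prefix_len. rewrite prefix_nth by auto.
      rewrite Pa by auto. unfold c. rewrite (per_eq b i) by lia. fold m. fold c.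
      destruct (Nat.eqb_spec (i mod m) (m - 1)); auto. }
    specialize (Hirr (in_V_ext M _ _ EV HV)).
    apply (lex_lt_not_le _ _ Hirr). eapply lex_le_trans; [exact Lt|].
    right. intros i. destruct (lt_dec i m).
    + rewrite wtp_lt by (rewrite prefix_len; auto). rewrite prefix_nth by auto.
      rewrite Pa by auto. destruct (Nat.eqb_spec i (m - 1)). subst i; auto. apply T1; lia.
    + replace i with (m + (i - m))%nat by lia. rewrite T3.
      pose proof (wtp_ge (prefix a m) (wplus (wflip M (prefix a m))) (i - m)) as W.
      rewrite prefix_len in W. rewrite W. set (s := (i - m)%nat).
      assert (Wn : wflip M (prefix a m) <> []) by (apply nonempty_of_len; rewrite wflip_len, prefix_len; lia).
      unfold periodic. rewrite wplus_len by auto. rewrite wflip_len, prefix_len.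
      pose proof (Nat.mod_upper_bound s m ltac:(lia)).
      rewrite wplus_nth by auto. rewrite wflip_len, prefix_len. rewrite wflip_nth. rewrite prefix_len.
      destruct (Nat.ltb_spec (s mod m) m); [|lia]. rewrite prefix_nth by auto.
      rewrite Pa by auto. assert (Cs : c s = c (s mod m)) by (unfold c, m; apply per_eq; lia). rewrite Cs.
      assert (c (m - 1) < M)%nat by (rewrite Cb by lia; auto).
      destruct (Nat.eqb_spec (s mod m) (m - 1)) as [X|X]. rewrite X. lia. auto.
  - (* a starts with b *)
    assert (Ag2 : agree a c m).
    { intros i Hi. destruct (Nat.eq_dec i (m - 1)). subst. lia. apply Ag. lia. }
    assert (Cper : forall k i, c (k * m + i)%nat = c i) by (intros; unfold c; apply per_mul; lia).
    assert (All : forall k, agree a c (k * m)).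
    { induction k. intros i Hi; lia.
      set (sa := shiftn (k * m) a).
      assert (L1 : lex_lt c sa).
      { apply lex_lt_ext with (shiftn (k * m) c) sa. intros i. unfold shiftn. apply Cper. intros i; auto.
        apply agree_lt_shift; auto. intros i Hi. symmetry; apply IHk; auto. }
      assert (M1 : ~ pre_lt sa c m) by (apply le_not_pre_lt; left; auto).
      assert (M2 : ~ pre_lt a sa m) by (apply le_not_pre_lt; apply Hs).
      pose proof (squeeze sa c a m M1 M2 Ag2) as Ag3.
      intros i Hi. destruct (lt_dec i (k * m)). apply IHk; auto.
      replace i with (k * m + (i - k * m))%nat by lia. rewrite Cper.
      apply (Ag3 (i - k * m)%nat). simpl in Hi. lia. }
    apply (lex_lt_irrefl c). eapply lex_lt_ext; [| |exact Lc]. intro; auto.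
    intros i. apply (All (S i) i). simpl. nia.
Qed.

Lemma t_facts M b : (1 <= length b)%nat ->
  let m := length b in let c := periodic b in let t := word_then_periodic (wplus b) (wflip M b) in
  (forall i, (i < m - 1)%nat -> t i = c i) /\ t (m - 1)%nat = S (c (m - 1)%nat) /\
  (forall s, t (m + s)%nat = (M - c s)%nat).
Proof.
  intros Hm m c t. pose proof (nonempty_of_len b Hm) as Hne. split; [|split].
  - intros i Hi. unfold t. rewrite wtp_lt by (rewrite wplus_len; auto; lia). rewrite wplus_nth by auto.
    fold m. destruct (Nat.eqb_spec i (m - 1)); try lia. unfold c. rewrite periodic_lt; auto. unfold m in *; lia.
  - unfold t. rewrite wtp_lt by (rewrite wplus_len; auto; unfold m in *; lia). rewrite wplus_nth by auto.
    fold m. rewrite Nat.eqb_refl. unfold c. rewrite periodic_lt; auto. unfold m in *; lia.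
  - intros s. unfold t. pose proof (wtp_ge (wplus b) (wflip M b) s) as W. rewrite wplus_len in W by auto.
    fold m in W. rewrite W. unfold periodic. rewrite wflip_nth. rewrite wflip_len. fold m.
    destruct (Nat.ltb_spec (s mod m) m). unfold c. unfold periodic. fold m. auto.
    pose proof (Nat.mod_upper_bound s m ltac:(unfold m in *; lia)). lia.
Qed.

Lemma t_shift M b : (1 <= length b)%nat -> in_V M (periodic b) -> (nth (length b - 1) b 0 < M)%nat ->
  (forall i, (0 < i < length b)%nat -> pre_lt (shiftn i (periodic b)) (periodic b) (length b - i)) ->
  forall k, lex_le (shiftn k (word_then_periodic (wplus b) (wflip M b))) (word_then_periodic (wplus b) (wflip M b)).
Proof.
  intros Hm HV Hlast Up.
  destruct (t_facts M b Hm) as [T1 [T2 T3]].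
  set (m := length b) in *. set (c := periodic b) in *. set (t := word_then_periodic (wplus b) (wflip M b)) in *.
  assert (Hc : in_Omega M c) by (destruct HV; auto).
  assert (Ct : lex_lt c t).
  { exists (m - 1)%nat. split. intros i Hi. symmetry; auto. rewrite T2. lia. }
  intros k. destruct (Nat.eq_dec k 0) as [->|Hk0].
  { right. intros i. reflexivity. }
  destruct (le_lt_dec m k) as [Hk|Hk].
  - left. eapply lex_le_lt_trans; [|exact Ct].
    apply lex_le_ext with (flip M (shiftn (k - m) c)) (flip M (flip M c)).
    + intros i. unfold flip, shiftn. replace (k + i)%nat with (m + (k - m + i))%nat by lia. rewrite T3. auto.
    + apply flip_flip; auto.
    + apply flip_le. apply flip_Omega. apply shift_Omega; auto. destruct HV as [_ HV]. apply HV.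
  - destruct (Up k ltac:(lia)) as [p0 [Hp0 [K1 K2]]].
    unfold shiftn in K1, K2.
    assert (Ctm : forall i, (i < m - 1)%nat -> c i = t i) by (intros; symmetry; auto).
    destruct (lt_dec p0 (m - k - 1)) as [Lp|Lp].
    + left. exists p0. unfold shiftn. split.
      intros t' Ht'. rewrite <- !Ctm by lia. auto. rewrite <- !Ctm by lia. auto.
    + assert (Ep : p0 = (m - k - 1)%nat) by lia. subst p0.
      replace (k + (m - k - 1))%nat with (m - 1)%nat in K2 by lia.
      destruct (Nat.eq_dec (S (c (m - 1)%nat)) (c (m - k - 1)%nat)) as [E|E].
      * left. apply (agree_shift_lt _ _ (m - k)).
        { intros i Hi. unfold shiftn. destruct (Nat.eq_dec i (m - k - 1)) as [->|Ne].
          replace (k + (m - k - 1))%nat with (m - 1)%nat by lia. rewrite T2, E. symmetry; apply T1; lia.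
          rewrite T1 by lia. rewrite T1 by lia. apply K1; lia. }
        apply lex_le_lt_trans with (shiftn (m - k) c).
        { apply lex_le_ext with (flip M c) (shiftn (m - k) c).
          intros i. unfold shiftn, flip. replace (k + (m - k + i))%nat with (m + i)%nat by lia. rewrite T3; auto.
          intros i; reflexivity. destruct HV as [_ HV]. apply HV. }
        exists (k - 1)%nat. unfold shiftn. split.
        intros i Hi. rewrite T1 by lia. auto.
        replace (m - k + (k - 1))%nat with (m - 1)%nat by lia. rewrite T2. lia.
      * left. exists (m - k - 1)%nat. unfold shiftn. split.
        intros t' Ht'. rewrite <- !Ctm by lia. auto.
        replace (k + (m - k - 1))%nat with (m - 1)%nat by lia. rewrite T2. rewrite <- Ctm by lia. lia.
Qed.

Definition Tj (M : nat) (a : nat -> nat) (j : nat) : nat -> nat :=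
  word_then_periodic (prefix a j) (wplus (wflip M (prefix a j))).

Lemma wm_facts a j : (1 <= j)%nat ->
  length (wminus (prefix a j)) = j /\
  forall i, (i < j)%nat -> nth i (wminus (prefix a j)) 0%nat = if (i =? j - 1)%nat then pred (a i) else a i.
Proof.
  intros Hj. assert (Pn : prefix a j <> []) by (apply nonempty_of_len; rewrite prefix_len; lia).
  split. rewrite wminus_len, prefix_len; auto.
  intros i Hi. rewrite wminus_nth by auto. rewrite prefix_len, prefix_nth by auto. auto.
Qed.

Lemma from_j M a j : (1 <= M)%nat -> in_Omega M a -> (forall n, lex_le (shiftn n a) a) ->
  (1 <= j)%nat -> (0 < a (j - 1))%nat -> in_V M (periodic (wminus (prefix a j))) -> lex_le a (Tj M a j) ->
  let b := wminus (prefix a j) in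
  fundamental M b /\ lex_lt (periodic b) a /\ lex_le a (word_then_periodic (wplus b) (wflip M b)) /\
  in_Omega M (periodic b) /\ ~ ends_in_zero (periodic b) /\ (forall n, lex_le (shiftn n (periodic b)) (periodic b)) /\
  in_Omega M (word_then_periodic (wplus b) (wflip M b)) /\ ~ ends_in_zero (word_then_periodic (wplus b) (wflip M b)) /\
  (forall n, lex_le (shiftn n (word_then_periodic (wplus b) (wflip M b))) (word_then_periodic (wplus b) (wflip M b))).
Proof.
  intros HM Ha Hs Hj Haj HV LT b.
  destruct (wm_facts a j Hj) as [Lb Nb]. fold b in Lb, Nb.
  set (c := periodic b) in *.
  assert (Hb1 : (1 <= length b)%nat) by lia.
  assert (Cj : forall i, (i < j)%nat -> c i = if (i =? j - 1)%nat then pred (a i) else a i).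
  { intros i Hi. unfold c. rewrite periodic_lt by lia. auto. }
  assert (Cper : forall i, c (i + j)%nat = c i) by (intros i; unfold c; rewrite <- Lb; apply per_plus; lia).
  assert (Hc : in_Omega M c) by (destruct HV; auto).
  assert (Cl : c (j - 1)%nat = pred (a (j - 1))) by (rewrite Cj by lia; rewrite Nat.eqb_refl; auto).
  assert (Cl' : (c (j - 1) < M)%nat) by (pose proof (Ha (j - 1)%nat); lia).
  assert (C0 : (M - c 0 <= c 0)%nat).
  { destruct (le_lt_dec (M - c 0) (c 0)); auto. exfalso. apply (V_lower M c 1 0 HV).
    exists 0%nat. split. lia. split. intros; lia. unfold shiftn, flip. auto. }
  assert (Up : forall i, (0 < i < j)%nat -> pre_lt (shiftn i c) c (j - i)).
  { intros i Hi. apply pre_or_agree. apply (V_upper M c _ _ HV). intros Ag.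
    apply (le_not_pre_lt _ _ (j - i) (Hs i)). exists (j - i - 1)%nat. split. lia. split.
    - intros t Ht. unfold shiftn. specialize (Ag t ltac:(lia)). unfold shiftn in Ag.
      rewrite Cj in Ag by lia. rewrite Cj in Ag by lia.
      destruct (Nat.eqb_spec (i + t) (j - 1)); destruct (Nat.eqb_spec t (j - 1)); lia.
    - unfold shiftn. specialize (Ag (j - i - 1)%nat ltac:(lia)). unfold shiftn in Ag.
      replace (i + (j - i - 1))%nat with (j - 1)%nat in * by lia.
      rewrite Cl in Ag. rewrite Cj in Ag by lia. destruct (Nat.eqb_spec (j - i - 1) (j - 1)); lia. }
  assert (Fund : fundamental M b).
  { split.
    { apply Forall_forall. intros x Hx. apply In_nth with (d := 0%nat) in Hx. destruct Hx as [i [Hi <-]].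
      pose proof (Hc i). unfold c in H. rewrite periodic_lt in H; auto. }
    destruct (Nat.eq_dec j 1) as [E|E].
    - right. replace (j - 1)%nat with 0%nat in Cl, Cl', Haj by lia. split.
      + destruct (le_lt_dec 2 M); auto. assert (M = 1%nat) by lia. 
        pose proof (Ha 0%nat). lia.
      + exists (c 0%nat). split.
        * unfold b. rewrite E. unfold wminus, prefix. simpl. f_equal. rewrite Cl. auto.
        * lia.
    - left. split. lia. intros i Hi. split.
      + apply not_pre_le with (length b - i)%nat. intros p Hp. rewrite WT1, WT3 by lia. auto.
        intros P. apply (V_lower M c (length b - i) i HV).
        eapply pre_transport; [| |exact P]. apply WA. apply WB. lia.
      + apply pre_lt_lex with (length b - i)%nat. assert (P := Up i ltac:(lia)). rewrite <- Lb in P.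
        eapply pre_transport; [| |exact P].
        intros p Hp. symmetry. apply WA. rewrite Lb; lia.
        intros p Hp. symmetry. apply WC. rewrite Lb; lia. }
  destruct (fund_props M b Fund) as [_ [_ [Hlast _]]].
  destruct (t_facts M b Hb1) as [T1 [T2 T3]]. rewrite Lb in T1, T2, T3. fold c in T1, T2, T3.
  set (t := word_then_periodic (wplus b) (wflip M b)) in *.
  assert (Et : eqs (Tj M a j) t).
  { intros i. unfold Tj. destruct (lt_dec i j).
    - rewrite wtp_lt by (rewrite prefix_len; auto). rewrite prefix_nth by auto.
      destruct (Nat.eq_dec i (j - 1)). subst i. rewrite T2. lia.
      rewrite T1 by lia. rewrite Cj by lia. destruct (Nat.eqb_spec i (j - 1)); lia.
    - replace i with (j + (i - j))%nat by lia. rewrite T3.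
      pose proof (wtp_ge (prefix a j) (wplus (wflip M (prefix a j))) (i - j)) as W.
      rewrite prefix_len in W. rewrite W. set (s := (i - j)%nat).
      assert (Wn : wflip M (prefix a j) <> []) by (apply nonempty_of_len; rewrite wflip_len, prefix_len; lia).
      unfold periodic. rewrite wplus_len by auto. rewrite wflip_len, prefix_len.
      pose proof (Nat.mod_upper_bound s j ltac:(lia)).
      rewrite wplus_nth by auto. rewrite wflip_len, prefix_len. rewrite wflip_nth. rewrite prefix_len.
      destruct (Nat.ltb_spec (s mod j) j); [|lia]. rewrite prefix_nth by auto.
      assert (Cs : c s = c (s mod j)) by (unfold c; rewrite <- Lb; apply per_eq; lia). rewrite Cs.
      rewrite Cj by auto. pose proof (Ha (s mod j)).
      destruct (Nat.eqb_spec (s mod j) (j - 1)) as [X|X]. rewrite X in *. lia. auto. }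
  split; [exact Fund|]. split.
  { exists (j - 1)%nat. split. intros i Hi. rewrite Cj by lia. destruct (Nat.eqb_spec i (j - 1)); lia. lia. }
  split. { eapply lex_le_ext; [| |exact LT]. intro; auto. exact Et. }
  assert (Cmul : forall k i, c (k * j + i)%nat = c i).
  { induction k; intros i. reflexivity. replace (S k * j + i)%nat with ((k * j + i) + j)%nat by lia. rewrite Cper. auto. }
  split; auto. split.
  { intros [N HN]. specialize (HN (N * j)%nat ltac:(nia)). rewrite <- (Nat.add_0_r (N * j)) in HN.
    rewrite Cmul in HN. lia. }
  split. { destruct HV as [_ HV]. intros n; apply HV. }
  split.
  { intros i. destruct (lt_dec i (j - 1)). rewrite T1 by auto. apply Hc.
    destruct (Nat.eq_dec i (j - 1)) as [e|e]. rewrite e, T2. lia.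
    replace i with (j + (i - j))%nat by lia. rewrite T3. lia. }
  split.
  { intros [N HN]. specialize (HN (j + (N * j + (j - 1)))%nat ltac:(nia)). rewrite T3, Cmul in HN. lia. }
  apply t_shift; auto. intros i Hi. rewrite Lb in *. apply Up. lia.
Qed.

Lemma even_half M : (Nat.even M = true /\ M = 2 * (M / 2))%nat \/ (Nat.even M = false /\ M = 2 * (M / 2) + 1)%nat.
Proof.
  induction M as [M IH] using lt_wf_ind. destruct M as [|[|k]].
  - left. auto.
  - right. auto.
  - assert (E : (S (S k) / 2 = S (k / 2))%nat).
    { replace (S (S k)) with (k + 1 * 2)%nat by lia. rewrite Nat.div_add by lia. lia. }
    rewrite E. change (Nat.even (S (S k))) with (Nat.even k).
    destruct (IH k ltac:(lia)) as [[A B]|[A B]]; [left|right]; split; auto; lia.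
Qed.

Lemma g_Om M : (1 <= M)%nat -> in_Omega M (qG_seq M).
Proof.
  intros HM i. unfold qG_seq. destruct (even_half M) as [[A B]|[A B]]; rewrite A.
  lia. destruct (Nat.even i); lia.
Qed.

Lemma g_flip M : (1 <= M)%nat -> lex_le (flip M (qG_seq M)) (qG_seq M).
Proof.
  intros HM. unfold qG_seq. destruct (even_half M) as [[A B]|[A B]]; rewrite A.
  - right. intros i. unfold flip. lia.
  - left. exists 0%nat. split. intros; lia. unfold flip. cbn -[Nat.div Nat.sub]. lia.
Qed.

Lemma a_flip M a : (1 <= M)%nat -> in_Omega M a -> lex_le (qG_seq M) a -> lex_le (flip M a) a.
Proof.
  intros HM Ha Hg. eapply lex_le_trans; [|exact Hg]. eapply lex_le_trans; [|apply g_flip; auto].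
  apply flip_le; auto. apply g_Om; auto.
Qed.

Lemma g_odd_contra M a : (1 <= M)%nat -> Nat.even M = false -> in_Omega M a -> lex_le (qG_seq M) a ->
  (2 * a 0 = M + 1)%nat -> lex_lt (shiftn 1 a) (flip M a) -> False.
Proof.
  intros HM Hodd Ha Hg H2 L.
  destruct (even_half M) as [[A B]|[A B]]; [congruence|].
  set (g := qG_seq M) in *.
  assert (Gi : forall i, g i = if Nat.even i then (M / 2 + 1)%nat else (M / 2)%nat).
  { intros i. unfold g, qG_seq. rewrite Hodd. auto. }
  assert (Ag : agree g a 1). { intros i Hi. replace i with 0%nat by lia. rewrite Gi. cbn -[Nat.div Nat.sub]. lia. }
  pose proof (agree_le_shift g a 1 Ag Hg) as L1.
  assert (E : eqs (flip M g) (shiftn 1 g)).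
  { intros i. unfold flip, shiftn. change (1 + i)%nat with (S i). rewrite (Gi i), (Gi (S i)). rewrite Nat.even_succ.
    rewrite <- Nat.negb_even. destruct (Nat.even i); cbn -[Nat.div Nat.sub]; lia. }
  assert (L2 : lex_le (flip M a) (flip M g)) by (apply flip_le; auto; apply g_Om; auto).
  apply (lex_lt_irrefl (shiftn 1 a)). eapply lex_lt_le_trans; [exact L|].
  eapply lex_le_trans; [exact L2|]. eapply lex_le_trans; [|exact L1]. right. exact E.
Qed.

Lemma reduce_to_j M a : (1 <= M)%nat -> in_Omega M a -> (forall n, lex_le (shiftn n a) a) ->
  lex_le (qG_seq M) a -> ~ irreducible M a ->
  exists j, (1 <= j)%nat /\ (0 < a (j - 1))%nat /\ in_V M (periodic (wminus (prefix a j))) /\ lex_le a (Tj M a j).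
Proof.
  intros HM Ha Hs Hg Hirr.
  destruct (classic (in_V M a)) as [HV|HV].
  - apply NNPP. intros N. apply Hirr. split; auto. intros j Hj Haj HVj.
    destruct (lex_total (Tj M a j) a) as [L|L]; auto. exfalso. apply N. exists j. auto.
  - assert (Ex : exists n, lex_lt (shiftn n a) (flip M a)).
    { apply NNPP. intros N. apply HV. split; auto. intros n. split; auto.
      apply not_lt_le. intros L. apply N. eauto. }
    destruct (min_witness _ Ex) as [n [Pn Hmin]].
    assert (AF := a_flip M a HM Ha Hg).
    assert (Hn : n <> 0%nat).
    { intros ->. apply (lex_lt_not_le _ _ Pn). eapply lex_le_ext; [| |exact AF]. intro; auto. intro; reflexivity. }
    assert (Lo : forall i, (i < n)%nat -> lex_le (flip M a) (shiftn i a)).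
    { intros i Hi. apply not_lt_le. apply Hmin; auto. }
    assert (Str : forall i, (i < n)%nat -> pre_lt (flip M a) (shiftn i a) (n - i)).
    { intros i Hi. apply pre_or_agree. apply le_not_pre_lt; auto. intros Ag.
      pose proof (agree_le_shift _ _ _ Ag (Lo i Hi)) as L1.
      assert (L2 : lex_le (flip M a) (flip M (shiftn (n - i) a))) by (apply flip_le; auto; apply shift_Omega; auto).
      apply (lex_lt_not_le _ _ Pn). eapply lex_le_trans; [exact L2|]. eapply lex_le_ext; [| |exact L1].
      intros t. reflexivity. intros t. unfold shiftn. f_equal. lia. }
    assert (Han : (0 < a (n - 1))%nat).
    { destruct (Str (n - 1)%nat ltac:(lia)) as [p [Hp [_ K]]]. replace p with 0%nat in K by lia.
      unfold flip, shiftn in K. rewrite Nat.add_0_r in K. lia. }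
    exists n. split. lia. split. auto.
    destruct (wm_facts a n ltac:(lia)) as [Lb Nb].
    set (b := wminus (prefix a n)) in *. set (c := periodic b).
    assert (Cn : forall i, (i < n)%nat -> c i = if (i =? n - 1)%nat then pred (a i) else a i).
    { intros i Hi. unfold c. rewrite periodic_lt by lia. auto. }
    assert (Cle : forall x, (x < n)%nat -> (c x <= a x /\ a x <= S (c x) /\ (x <> n - 1 -> c x = a x))%nat).
    { intros x Hx. rewrite Cn by auto. destruct (Nat.eqb_spec x (n - 1)); lia. }
    assert (Cper : forall i, c (i + n)%nat = c i) by (intros i; unfold c; rewrite <- Lb; apply per_plus; lia).
    split.
    + split.
      { intros i. rewrite (per_mod n c ltac:(lia) Cper i). pose proof (Nat.mod_upper_bound i n ltac:(lia)).
        destruct (Cle (i mod n)%nat H) as [X _]. pose proof (Ha (i mod n)%nat). lia. }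
      assert (HcO : in_Omega M c).
      { intros i. rewrite (per_mod n c ltac:(lia) Cper i). pose proof (Nat.mod_upper_bound i n ltac:(lia)).
        destruct (Cle (i mod n)%nat H) as [X _]. pose proof (Ha (i mod n)%nat). lia. }
      intros k. split.
      * apply (per_lower M n c); auto. lia.
        intros i Hi [p1 [Hp1 [K1 K2]]]. unfold shiftn, flip in K1, K2.
        destruct (Str i Hi) as [p0 [Hp0 [J1 J2]]]. unfold shiftn, flip in J1, J2.
        destruct (Nat.eq_dec i 0) as [->|Ni].
        -- simpl in K1, K2, J1, J2.
           destruct (lt_eq_lt_dec p1 p0) as [[Lt|Eq]|Gt].
           ++ specialize (J1 p1 Lt). destruct (Cle p1 ltac:(lia)) as [_ [_ X]]. specialize (X ltac:(lia)). lia.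
           ++ subst p1. destruct (Nat.eq_dec p0 (n - 1)) as [E|E].
              ** subst p0. destruct (Cle (n - 1)%nat ltac:(lia)) as [X1 [X2 _]].
                 assert (Hodd : (2 * a (n - 1) = M + 1)%nat) by (pose proof (Ha (n - 1)%nat); lia).
                 destruct (Nat.eq_dec n 1) as [E1|E1].
                 { rewrite E1 in Hodd, Pn. simpl in Hodd. destruct (even_half M) as [[A B]|[A B]]. lia.
                   apply (g_odd_contra M a HM A Ha Hg Hodd Pn). }
                 specialize (J1 0%nat ltac:(lia)). lia.
              ** destruct (Cle p0 ltac:(lia)) as [_ [_ X]]. specialize (X E). lia.
           ++ specialize (K1 p0 Gt). destruct (Cle p0 ltac:(lia)) as [_ [_ X]]. specialize (X ltac:(lia)). lia.
        -- destruct (lt_eq_lt_dec p1 p0) as [[Lt|Eq]|Gt].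
           ++ specialize (J1 p1 Lt). destruct (Cle (i + p1)%nat ltac:(lia)) as [_ [_ X]]. specialize (X ltac:(lia)).
              destruct (Cle p1 ltac:(lia)) as [_ [_ Y]]. specialize (Y ltac:(lia)). lia.
           ++ subst p1. destruct (Cle (i + p0)%nat ltac:(lia)) as [X1 [X2 _]].
              destruct (Cle p0 ltac:(lia)) as [_ [_ Y]]. specialize (Y ltac:(lia)). lia.
           ++ specialize (K1 p0 Gt). destruct (Cle (i + p0)%nat ltac:(lia)) as [X1 [X2 X3]].
              destruct (Cle p0 ltac:(lia)) as [_ [_ Y]]. specialize (Y ltac:(lia)).
              destruct (Nat.eq_dec (i + p0) (n - 1)). lia. specialize (X3 n0). lia.
      * apply (per_upper n c). lia. auto. intros i Hi.
        destruct (classic (agree (shiftn i a) a (n - i))) as [Ag|Ag].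
        -- exists (n - i - 1)%nat. split. lia. unfold shiftn. split.
           ++ intros t Ht. specialize (Ag t ltac:(lia)). unfold shiftn in Ag.
              destruct (Cle (i + t)%nat ltac:(lia)) as [_ [_ X]]. destruct (Cle t ltac:(lia)) as [_ [_ Y]].
              rewrite X, Y by lia. auto.
           ++ specialize (Ag (n - i - 1)%nat ltac:(lia)). unfold shiftn in Ag.
              replace (i + (n - i - 1))%nat with (n - 1)%nat in * by lia.
              rewrite (Cn (n - 1)%nat) by lia. rewrite Nat.eqb_refl.
              destruct (Cle (n - i - 1)%nat ltac:(lia)) as [_ [_ Y]]. rewrite Y by lia. lia.
        -- assert (P := pre_or_agree (shiftn i a) a (n - i) (le_not_pre_lt _ _ _ (Hs i)) Ag).
           destruct P as [p0 [Hp0 [J1 J2]]]. unfold shiftn in J1, J2.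
           exists p0. split. auto. unfold shiftn. split.
           ++ intros t Ht. destruct (Cle (i + t)%nat ltac:(lia)) as [_ [_ X]]. destruct (Cle t ltac:(lia)) as [_ [_ Y]].
              rewrite X, Y by lia. auto.
           ++ destruct (Cle (i + p0)%nat ltac:(lia)) as [X _]. destruct (Cle p0 ltac:(lia)) as [_ [_ Y]].
              rewrite Y by lia. lia.
    + left. set (T := Tj M a n).
      assert (Ta : agree a T n).
      { intros i Hi. unfold T, Tj. rewrite wtp_lt by (rewrite prefix_len; auto). rewrite prefix_nth; auto. }
      assert (Pn' : prefix a n <> []) by (apply nonempty_of_len; rewrite prefix_len; lia).
      assert (Wn : wflip M (prefix a n) <> []) by (apply nonempty_of_len; rewrite wflip_len, prefix_len; lia).
      assert (TS : forall s, (s < n)%nat -> T (n + s)%nat = if (s =? n - 1)%nat then S (M - a s) else (M - a s)%nat).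
      { intros s Hs'. unfold T, Tj. pose proof (wtp_ge (prefix a n) (wplus (wflip M (prefix a n))) s) as W.
        rewrite prefix_len in W. rewrite W. rewrite periodic_lt by (rewrite wplus_len, wflip_len, prefix_len; auto).
        rewrite wplus_nth by auto. rewrite wflip_len, prefix_len, wflip_nth, prefix_len.
        destruct (Nat.ltb_spec s n); [|lia]. rewrite prefix_nth by auto. auto. }
      apply (agree_shift_lt _ _ n Ta).
      destruct Pn as [p [K1 K2]]. unfold shiftn, flip in K1, K2.
      exists (Nat.min p (n - 1)). unfold shiftn. split.
      * intros t Ht. rewrite TS by lia. destruct (Nat.eqb_spec t (n - 1)); [lia|]. apply K1. lia.
      * rewrite TS by lia. destruct (Nat.eqb_spec (Nat.min p (n - 1)) (n - 1)) as [E|E].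
        -- rewrite E. destruct (Nat.eq_dec p (n - 1)). subst p. lia.
           assert (n - 1 < p)%nat by lia. specialize (K1 (n - 1)%nat H). lia.
        -- replace (Nat.min p (n - 1)) with p in * by lia. auto.
Qed.

From Coquelicot Require Import Coquelicot.
Open Scope R_scope.

Lemma inv_lt_1 q : 1 < q -> / q < 1.
Proof. intros H. pose proof (Rinv_1_lt_contravar 1 q ltac:(lra) H). rewrite Rinv_1 in H0. auto. Qed.

Definition term (q : R) (c : nat -> nat) (i : nat) : R := INR (c i) / q ^ (S i).
Definition val (q : R) (c : nat -> nat) : R := Series (term q c).

Fixpoint psum (q : R) (c : nat -> nat) (n : nat) : R :=
  match n with O => 0 | S k => psum q c k + term q c k end.

Lemma term_nonneg q c i : 0 < q -> 0 <= term q c i.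
Proof. intros Hq. unfold term. apply Rdiv_le_0_compat. apply pos_INR. apply pow_lt; auto. Qed.

Lemma term_bound M q c i : 1 < q -> in_Omega M c -> term q c i <= INR M * (/ q) ^ (S i).
Proof.
  intros Hq Hc. unfold term. rewrite pow_inv. unfold Rdiv. apply Rmult_le_compat_r.
  left; apply Rinv_0_lt_compat, pow_lt; lra. apply le_INR, Hc.
Qed.

Lemma ex_val M q c : 1 < q -> in_Omega M c -> ex_series (term q c).
Proof.
  intros Hq Hc. apply (@ex_series_le R_AbsRing R_CompleteNormedModule) with (fun i => INR M * (/ q) ^ (S i)).
  - intros n. rewrite Rabs_pos_eq. apply term_bound; auto. apply term_nonneg; lra.
  - apply (ex_series_ext (fun i => scal (INR M / q) ((/ q) ^ i))).
    intros n. unfold scal; simpl. unfold mult; simpl. unfold Rdiv. ring.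
    apply (ex_series_scal_l (K:=R_AbsRing) (V:=R_NormedModule)). apply ex_series_geom. rewrite Rabs_pos_eq.
    apply inv_lt_1; lra. left; apply Rinv_0_lt_compat; lra.
Qed.

Lemma val_shift M q c : 1 < q -> in_Omega M c -> val q c = INR (c O) / q + val q (shiftn 1 c) / q.
Proof.
  intros Hq Hc. unfold val. rewrite Series_incr_1 by (eapply ex_val; eauto).
  unfold term at 1. simpl pow. rewrite Rmult_1_r. f_equal.
  unfold Rdiv. rewrite (Rmult_comm (Series _)). rewrite <- Series_scal_l. apply Series_ext.
  intros n. unfold term, shiftn. simpl. field. split. apply pow_nonzero; lra. lra.
Qed.

Lemma shift_Om M c n : in_Omega M c -> in_Omega M (shiftn n c).
Proof. intros H i. apply H. Qed.

Lemma val_shiftn M q c n : 1 < q -> in_Omega M c -> val q c = psum q c n + val q (shiftn n c) / q ^ n.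
Proof.
  intros Hq Hc. induction n.
  - simpl. unfold Rdiv. rewrite Rinv_1, Rmult_1_r. rewrite Rplus_0_l. apply Series_ext. intros; reflexivity.
  - rewrite IHn. rewrite (val_shift M q (shiftn n c)) by (auto; apply shift_Om; auto).
    simpl psum. unfold term.
    assert (E : val q (shiftn 1 (shiftn n c)) = val q (shiftn (S n) c)).
    { unfold val. apply Series_ext. intros i. unfold term, shiftn. f_equal. f_equal. f_equal. lia. }
    rewrite E. unfold shiftn at 1. rewrite Nat.add_0_r. simpl pow. field.
    split. apply pow_nonzero; lra. lra.
Qed.

Lemma val_nonneg M q c : 1 < q -> in_Omega M c -> 0 <= val q c.
Proof.
  intros Hq Hc. unfold val. replace 0 with (0 * Series (term q c)) by ring.
  rewrite <- Series_scal_l.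
  apply Series_le. intros n. split. lra. rewrite Rmult_0_l. apply term_nonneg; lra. eapply ex_val; eauto.
Qed.

Lemma val_le M q c d : 1 < q -> in_Omega M d -> (forall i, (c i <= d i)%nat) -> val q c <= val q d.
Proof.
  intros Hq Hd H. unfold val. apply Series_le. intros n. split. apply term_nonneg; lra.
  unfold term. unfold Rdiv. apply Rmult_le_compat_r. left; apply Rinv_0_lt_compat, pow_lt; lra.
  apply le_INR; auto. eapply ex_val; eauto.
Qed.

Lemma val_bound M q c : 1 < q -> in_Omega M c -> val q c <= INR M / (q - 1).
Proof.
  intros Hq Hc. unfold val.
  assert (G : is_series (fun i => INR M / q * (/ q) ^ i) (INR M / q * / (1 - / q))).
  { assert (G0 : is_series (fun i => scal (INR M / q) ((/ q) ^ i)) (scal (INR M / q) (/ (1 - / q)))).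
    2:{ exact G0. }
    apply (is_series_scal_l (K:=R_AbsRing) (V:=R_NormedModule)). apply is_series_geom. rewrite Rabs_pos_eq.
    apply inv_lt_1; lra. left; apply Rinv_0_lt_compat; lra. }
  replace (INR M / (q - 1)) with (INR M / q * / (1 - / q)).
  rewrite <- (is_series_unique _ _ G). apply Series_le.
  intros n. split. apply term_nonneg; lra. eapply Rle_trans. apply term_bound; eauto.
  right. simpl. unfold Rdiv. ring. exists (INR M / q * / (1 - / q)). auto.
  field. lra.
Qed.

Lemma psum_nonneg q c n : 0 < q -> 0 <= psum q c n.
Proof. intros Hq. induction n; simpl. lra. pose proof (term_nonneg q c n Hq). lra. Qed.

Lemma val_ge_psum M q c n : 1 < q -> in_Omega M c -> psum q c n <= val q c.
Proof.
  intros Hq Hc. rewrite (val_shiftn M q c n) by auto.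
  pose proof (val_nonneg M q (shiftn n c) Hq (shift_Om M c n Hc)).
  assert (0 < q ^ n) by (apply pow_lt; lra).
  assert (0 <= val q (shiftn n c) / q ^ n) by (apply Rdiv_le_0_compat; lra). lra.
Qed.

Lemma nz_pos c : ~ ends_in_zero c -> forall N, exists i, (N <= i)%nat /\ (0 < c i)%nat.
Proof.
  intros H N. apply NNPP. intros H2. apply H. exists N. intros i Hi.
  destruct (c i) eqn:E; auto. exfalso. apply H2. exists i. split; auto. lia.
Qed.

Lemma val_pos M q c : 1 < q -> in_Omega M c -> ~ ends_in_zero c -> 0 < val q c.
Proof.
  intros Hq Hc Hz. destruct (nz_pos c Hz 0) as [i [_ Hi]].
  eapply Rlt_le_trans; [|apply (val_ge_psum M q c (S i)); auto].
  simpl. pose proof (psum_nonneg q c i ltac:(lra)).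
  assert (0 < term q c i). { unfold term. apply Rdiv_lt_0_compat. apply lt_0_INR; auto. apply pow_lt; lra. }
  lra.
Qed.

Lemma val_le_base M q1 q2 c : 1 < q1 -> q1 <= q2 -> in_Omega M c -> val q2 c <= val q1 c.
Proof.
  intros H1 H2 Hc. unfold val. apply Series_le. intros n. split. apply term_nonneg; lra.
  unfold term. unfold Rdiv. apply Rmult_le_compat_l. apply pos_INR.
  apply Rinv_le_contravar. apply pow_lt; lra. apply pow_incr; lra. eapply ex_val; eauto.
Qed.

Lemma pow_lt_base a b n : 0 <= a -> a < b -> a ^ (S n) < b ^ (S n).
Proof.
  intros Ha Hb. induction n. simpl. lra.
  change (a * a ^ (S n) < b * b ^ (S n)).
  assert (0 <= a ^ S n) by (apply pow_le; auto).
  apply Rle_lt_trans with (a * b ^ S n). apply Rmult_le_compat_l; lra.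
  apply Rmult_lt_compat_r. apply pow_lt; lra. auto.
Qed.

Lemma val_lt_base M q1 q2 c : 1 < q1 -> q1 < q2 -> in_Omega M c -> ~ ends_in_zero c -> val q2 c < val q1 c.
Proof.
  intros H1 H2 Hc Hz. destruct (nz_pos c Hz 0) as [i [_ Hi]].
  rewrite (val_shiftn M q1 c (S i)), (val_shiftn M q2 c (S i)) by (auto; lra).
  assert (P : forall n, psum q2 c n <= psum q1 c n).
  { induction n; simpl. lra. assert (term q2 c n <= term q1 c n); [|lra].
    unfold term, Rdiv. apply Rmult_le_compat_l. apply pos_INR.
    apply Rinv_le_contravar. apply pow_lt; lra. apply pow_incr; lra. }
  assert (T : term q2 c i < term q1 c i).
  { unfold term, Rdiv. apply Rmult_lt_compat_l. apply lt_0_INR; auto.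
    apply Rinv_lt_contravar. apply Rmult_lt_0_compat; apply pow_lt; lra.
    apply pow_lt_base; lra. }
  assert (V1 : val q2 (shiftn (S i) c) <= val q1 (shiftn (S i) c)).
  { apply (val_le_base M); auto; try lra. apply shift_Om; auto. }
  assert (V0 : 0 <= val q2 (shiftn (S i) c)). { apply (val_nonneg M); auto; try lra. apply shift_Om; auto. }
  assert (W : val q2 (shiftn (S i) c) / q2 ^ S i <= val q1 (shiftn (S i) c) / q1 ^ S i).
  { unfold Rdiv. apply Rmult_le_compat; auto. left; apply Rinv_0_lt_compat, pow_lt; lra.
    apply Rinv_le_contravar. apply pow_lt; lra. apply pow_incr; lra. }
  simpl psum. specialize (P i). lra.
Qed.

Lemma small_zero q z K : 1 < q -> (forall n, Rabs z <= K / q ^ n) -> z = 0.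
Proof.
  intros Hq H. destruct (Req_dec z 0) as [E|E]; auto. exfalso.
  assert (Hz : 0 < Rabs z) by (apply Rabs_pos_lt; auto).
  assert (HK : 0 < K). { specialize (H O). simpl in H. lra. }
  destruct (INR_archimed ((q - 1) * Rabs z) K) as [n Hn]. apply Rmult_lt_0_compat; lra.
  specialize (H n). pose proof (poly n (q - 1) ltac:(lra)). replace (1 + (q - 1)) with q in H0 by ring.
  assert (0 < q ^ n) by (apply pow_lt; lra).
  assert (Rabs z * q ^ n <= K). { apply Rmult_le_reg_r with (/ q ^ n). apply Rinv_0_lt_compat; auto.
    rewrite Rmult_assoc, Rinv_r by lra. rewrite Rmult_1_r. exact H. }
  assert (Rabs z * (1 + INR n * (q - 1)) <= Rabs z * q ^ n) by (apply Rmult_le_compat_l; lra).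
  nra.
Qed.

Lemma pow_unbounded q e B : 1 < q -> 0 < e -> exists n, B < q ^ n * e.
Proof.
  intros Hq He. destruct (INR_archimed ((q - 1) * e) B) as [n Hn]. apply Rmult_lt_0_compat; lra.
  exists n. pose proof (poly n (q - 1) ltac:(lra)). replace (1 + (q - 1)) with q in H by ring.
  assert (e * (1 + INR n * (q - 1)) <= e * q ^ n) by (apply Rmult_le_compat_l; lra). nra.
Qed.

(* ---------------- the quasi-greedy algorithm ---------------- *)
Definition digit (M : nat) (t : R) : nat := Nat.min M (Z.to_nat (- up (- t))).

Lemma up_facts t : IZR (- up (- t)) < t /\ t - 1 <= IZR (- up (- t)).
Proof. destruct (archimed (- t)) as [H1 H2]. rewrite opp_IZR. lra. Qed.

Lemma digit_z t : 0 < t -> (0 <= - up (- t))%Z.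
Proof.
  intros Ht. destruct (up_facts t) as [H1 H2].
  assert (IZR (-1) < IZR (- up (- t))) by (simpl; lra). apply lt_IZR in H. lia.
Qed.

Lemma INR_toZ z : (0 <= z)%Z -> INR (Z.to_nat z) = IZR z.
Proof. intros H. rewrite INR_IZR_INZ. rewrite Z2Nat.id; auto. Qed.

Lemma digit_lt M t : 0 < t -> INR (digit M t) < t.
Proof.
  intros Ht. destruct (up_facts t) as [H1 H2]. pose proof (digit_z t Ht).
  unfold digit. eapply Rle_lt_trans; [|exact H1]. rewrite <- INR_toZ by auto.
  apply le_INR. lia.
Qed.

Lemma digit_le M t : (digit M t <= M)%nat.
Proof. unfold digit. lia. Qed.

Lemma digit_ub M t : 0 < t -> (digit M t < M)%nat -> t <= INR (digit M t) + 1.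
Proof.
  intros Ht Hd. destruct (up_facts t) as [H1 H2]. pose proof (digit_z t Ht).
  unfold digit in *. rewrite Nat.min_r by lia. rewrite INR_toZ by auto. lra.
Qed.

Lemma digit_mono M t t' : 0 < t -> t <= t' -> (digit M t <= digit M t')%nat.
Proof.
  intros Ht Htt. destruct (up_facts t) as [H1 H2]. destruct (up_facts t') as [H3 H4].
  pose proof (digit_z t Ht). pose proof (digit_z t' ltac:(lra)).
  assert (IZR (- up (- t)) < IZR (- up (- t') + 1)) by (rewrite plus_IZR; simpl; lra).
  apply lt_IZR in H5. unfold digit. lia.
Qed.

Fixpoint rem (M : nat) (q x : R) (n : nat) : R :=
  match n with O => x | S k => q * rem M q x k - INR (digit M (q * rem M q x k)) end.
Definition dig (M : nat) (q x : R) (n : nat) : nat := digit M (q * rem M q x n).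

Lemma dig_Om M q x : in_Omega M (dig M q x).
Proof. intros i. apply digit_le. Qed.

Lemma rem_bounds M q x n : 1 < q <= INR M + 1 -> 0 < x <= 1 -> 0 < rem M q x n <= 1.
Proof.
  intros Hq Hx. induction n; simpl; auto.
  set (t := q * rem M q x n). assert (Ht : 0 < t <= q) by (unfold t; nra).
  pose proof (digit_lt M t ltac:(lra)). split. lra.
  destruct (Nat.eq_dec (digit M t) M) as [E|E].
  - rewrite E. lra.
  - pose proof (digit_ub M t ltac:(lra) ltac:(pose proof (digit_le M t); lia)). lra.
Qed.

Lemma rem_add M q x n k : rem M q x (n + k) = rem M q (rem M q x n) k.
Proof. induction k. rewrite Nat.add_0_r; reflexivity. rewrite Nat.add_succ_r. simpl. rewrite IHk. reflexivity. Qed.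

Lemma dig_shift M q x n : eqs (shiftn n (dig M q x)) (dig M q (rem M q x n)).
Proof. intros k. unfold shiftn, dig. rewrite rem_add. reflexivity. Qed.

Lemma rem_psum M q x n : 1 < q -> x = psum q (dig M q x) n + rem M q x n / q ^ n.
Proof.
  intros Hq. induction n. simpl. field.
  rewrite IHn at 1. simpl psum. unfold term, dig. simpl rem. simpl pow. field.
  split. apply pow_nonzero; lra. lra.
Qed.

Lemma val_dig M q x : 1 < q <= INR M + 1 -> 0 < x <= 1 -> val q (dig M q x) = x.
Proof.
  intros Hq Hx. symmetry. apply Rminus_diag_uniq.
  apply (small_zero q _ (1 + INR M / (q - 1))). lra. intros n.
  rewrite (rem_psum M q x n) at 1 by lra. rewrite (val_shiftn M q (dig M q x) n) by (auto; try lra; apply dig_Om).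
  pose proof (rem_bounds M q x n Hq Hx).
  pose proof (val_nonneg M q (shiftn n (dig M q x)) ltac:(lra) (shift_Om _ _ _ (dig_Om M q x))).
  pose proof (val_bound M q (shiftn n (dig M q x)) ltac:(lra) (shift_Om _ _ _ (dig_Om M q x))).
  assert (0 < q ^ n) by (apply pow_lt; lra).
  replace (psum q (dig M q x) n + rem M q x n / q ^ n - (psum q (dig M q x) n + val q (shiftn n (dig M q x)) / q ^ n))
    with ((rem M q x n - val q (shiftn n (dig M q x))) / q ^ n) by (field; lra).
  rewrite Rabs_div by lra. rewrite (Rabs_pos_eq (q ^ n)) by lra.
  unfold Rdiv. apply Rmult_le_compat_r. left; apply Rinv_0_lt_compat; auto.
  apply Rabs_le. assert (0 <= INR M / (q - 1)) by (apply Rdiv_le_0_compat; [apply pos_INR|lra]). lra.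
Qed.

Lemma dig_nz M q x : 1 < q <= INR M + 1 -> 0 < x <= 1 -> ~ ends_in_zero (dig M q x).
Proof.
  intros Hq Hx [N HN].
  assert (G : forall k, rem M q x (N + k) = q ^ k * rem M q x N).
  { induction k. rewrite Nat.add_0_r. simpl. ring.
    rewrite Nat.add_succ_r. simpl rem. rewrite IHk.
    assert (E : dig M q x (N + k) = O) by (apply HN; lia). unfold dig in E. rewrite IHk in E. rewrite E.
    simpl. ring. }
  pose proof (rem_bounds M q x N Hq Hx).
  destruct (pow_unbounded q (rem M q x N) 1 ltac:(lra) ltac:(lra)) as [k Hk].
  pose proof (rem_bounds M q x (N + k) Hq Hx). rewrite G in H0. lra.
Qed.

Lemma dig_max M q x b : 1 < q <= INR M + 1 -> 0 < x <= 1 -> in_Omega M b -> ~ ends_in_zero b ->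
  val q b = x -> lex_le b (dig M q x).
Proof.
  intros Hq Hx Hb Hz Hv. apply not_lt_le. intros [n [H1 H2]].
  set (d := dig M q x) in *.
  assert (Hd : (d n < M)%nat) by (pose proof (Hb n); lia).
  assert (Ht := digit_ub M (q * rem M q x n)). fold (dig M q x n) in Ht. fold d in Ht.
  pose proof (rem_bounds M q x n Hq Hx).
  specialize (Ht ltac:(nra) Hd).
  assert (Hps : psum q b n = psum q d n).
  { clear -H1. induction n. reflexivity. simpl. rewrite IHn. unfold term. rewrite H1; auto.
    intros i Hi; apply H1; lia. }
  rewrite (val_shiftn M q b n) in Hv by (auto; lra).
  rewrite (val_shift M q (shiftn n b)) in Hv by (auto; try lra; apply shift_Om; auto).
  assert (Z : ~ ends_in_zero (shiftn 1 (shiftn n b))).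
  { intros [N HN]. apply Hz. exists (n + 1 + N)%nat. intros i Hi. specialize (HN (i - n - 1)%nat ltac:(lia)).
    unfold shiftn in HN. rewrite <- HN. f_equal. lia. }
  pose proof (val_pos M q (shiftn 1 (shiftn n b)) ltac:(lra) ltac:(do 2 apply shift_Om; auto) Z) as Hvp.
  rewrite (rem_psum M q x n) in Hv by lra. fold d in Hv. rewrite Hps in Hv.
  assert (INR (d n) + 1 <= INR (shiftn n b 0)).
  { unfold shiftn. rewrite Nat.add_0_r. rewrite <- S_INR. apply le_INR. lia. }
  assert (0 < q ^ n) by (apply pow_lt; lra).
  assert (rem M q x n < (INR (shiftn n b 0) / q + val q (shiftn 1 (shiftn n b)) / q)).
  { apply Rmult_lt_reg_l with q. lra. field_simplify; try lra.  }
  assert (rem M q x n / q ^ n < (INR (shiftn n b 0) / q + val q (shiftn 1 (shiftn n b)) / q) / q ^ n).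
  { unfold Rdiv at 1 3. apply Rmult_lt_compat_r. apply Rinv_0_lt_compat; auto. auto. }
  lra.
Qed.

Lemma dig_mono M q x y : 1 < q <= INR M + 1 -> 0 < x <= 1 -> 0 < y <= 1 -> x <= y ->
  lex_le (dig M q x) (dig M q y).
Proof.
  intros Hq Hx Hy Hxy. apply not_lt_le. intros [n [H1 H2]].
  assert (G : forall k, (k <= n)%nat -> rem M q x k - rem M q y k = q ^ k * (x - y)).
  { induction k; intros Hk. simpl. ring. simpl rem. 
    assert (E := H1 k ltac:(lia)). unfold dig in E. rewrite E.
    transitivity (q * (rem M q x k - rem M q y k)). ring. rewrite IHk by lia. simpl. ring. }
  specialize (G n (le_n n)). pose proof (rem_bounds M q x n Hq Hx).
  assert (0 < q ^ n) by (apply pow_lt; lra).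
  assert (q ^ n * (x - y) <= 0) by nra.
  assert (rem M q x n <= rem M q y n) by nra.
  assert (digit M (q * rem M q x n) <= digit M (q * rem M q y n))%nat.
  { apply digit_mono. nra. nra. }
  unfold dig in H2. lia.
Qed.

Lemma is_series_val M q c : 1 < q -> in_Omega M c -> infinite_sum (fun i => INR (c i) / q ^ (S i)) (val q c).
Proof. intros Hq Hc. apply is_series_Reals. apply Series_correct. eapply ex_val; eauto. Qed.

Lemma val_of_sum M q c l : 1 < q -> in_Omega M c -> infinite_sum (fun i => INR (c i) / q ^ (S i)) l -> val q c = l.
Proof. intros Hq Hc H. apply is_series_Reals in H. apply is_series_unique in H. exact H. Qed.

Lemma alpha_dig M q : 1 < q <= INR M + 1 -> is_alpha M q (dig M q 1).
Proof.
  intros Hq. split; auto. split. apply dig_Om. split. apply dig_nz; auto; lra.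
  split. pose proof (is_series_val M q (dig M q 1) ltac:(lra) (dig_Om M q 1)) as G.
  rewrite (val_dig M q 1) in G by (auto; lra). exact G.
  intros b Hb Hz Hs. apply (dig_max M q 1 b); auto; try lra. apply (val_of_sum M q b 1); auto; lra.
Qed.

Lemma alpha_unique M q a a' : is_alpha M q a -> is_alpha M q a' -> eqs a a'.
Proof.
  intros [H1 [H2 [H3 [H4 H5]]]] [G1 [G2 [G3 [G4 G5]]]]. apply lex_le_antisym; auto.
Qed.

Lemma alpha_is_dig M q a : is_alpha M q a -> eqs a (dig M q 1).
Proof. intros H. apply (alpha_unique M q); auto. apply alpha_dig. destruct H; auto. Qed.

Lemma alpha_val M q a : is_alpha M q a -> val q a = 1.
Proof. intros [H1 [H2 [H3 [H4 H5]]]]. apply (val_of_sum M); auto. lra. Qed.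

Lemma alpha_shift M q a : is_alpha M q a -> forall n, lex_le (shiftn n a) a.
Proof.
  intros Ha n. pose proof (alpha_is_dig M q a Ha) as E. destruct Ha as [Hq _].
  apply lex_le_ext with (dig M q (rem M q 1 n)) (dig M q 1).
  intros i. rewrite <- (dig_shift M q 1 n i). unfold shiftn. rewrite E. reflexivity.
  intros i. rewrite E; reflexivity.
  apply dig_mono; auto; try lra. apply rem_bounds; auto; lra. apply rem_bounds; auto; lra.
Qed.

Lemma alpha_mono M q1 q2 a1 a2 : is_alpha M q1 a1 -> is_alpha M q2 a2 -> q1 < q2 -> lex_lt a1 a2.
Proof.
  intros H1 H2 Hlt. destruct (lex_total a1 a2) as [L|L]; auto. exfalso.
  pose proof (alpha_val M q1 a1 H1) as V1. pose proof (alpha_val M q2 a2 H2) as V2.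
  pose proof (alpha_is_dig M q2 a2 H2) as E2.
  destruct H1 as [Q1 [O1 [Z1 _]]]. destruct H2 as [Q2 [O2 [Z2 _]]].
  assert (S1 : val q2 a1 < val q1 a1) by (apply (val_lt_base M); auto; lra).
  assert (G : 1 <= val q2 a1).
  { destruct L as [[n [L1 L2]]|L].
    - assert (Hd : (a2 n < M)%nat) by (pose proof (O1 n); lia).
      rewrite E2 in Hd. pose proof (rem_bounds M q2 1 n Q2 ltac:(lra)).
      pose proof (digit_ub M (q2 * rem M q2 1 n) ltac:(nra) Hd) as Ht.
      pose proof (rem_psum M q2 1 n ltac:(lra)) as R.
      assert (Hps : psum q2 (dig M q2 1) n = psum q2 a1 n).
      { clear -L1 E2. induction n. reflexivity. simpl. rewrite IHn. unfold term. rewrite <- E2. rewrite L1; auto.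
        intros i Hi; apply L1; lia. }
      rewrite Hps in R. rewrite R.
      eapply Rle_trans; [|apply (val_ge_psum M q2 a1 (S n)); auto; lra].
      simpl psum. apply Rplus_le_compat_l. unfold term.
      assert (INR (dig M q2 1 n) + 1 <= INR (a1 n)).
      { rewrite <- S_INR. apply le_INR. rewrite <- E2. lia. }
      assert (0 < q2 ^ n) by (apply pow_lt; lra).
      unfold dig in H0. simpl pow.
      apply Rmult_le_reg_r with (q2 * q2 ^ n). nra.
      field_simplify; try lra.
    - rewrite <- V2. right. unfold val. apply Series_ext. intros i. unfold term. rewrite L. auto. }
  lra.
Qed.

Lemma alpha_lt_iff M q1 q2 a1 a2 : is_alpha M q1 a1 -> is_alpha M q2 a2 -> (q1 < q2 <-> lex_lt a1 a2).
Proof.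
  intros H1 H2. split. apply (alpha_mono M); auto. intros L.
  destruct (Rlt_or_le q1 q2) as [R|R]; auto. exfalso. destruct R as [R|R].
  - eapply lex_lt_not_le. exact L. left. apply (alpha_mono M q2 q1 a2 a1); auto.
  - subst. pose proof (alpha_unique M _ a1 a2 H1 H2). eapply lex_lt_irrefl. eapply lex_lt_ext; [| |exact L]. intro; auto. intro; rewrite <- H; auto.
Qed.

Lemma alpha_le_iff M q1 q2 a1 a2 : is_alpha M q1 a1 -> is_alpha M q2 a2 -> (q1 <= q2 <-> lex_le a1 a2).
Proof.
  intros H1 H2. split.
  - intros [L|L]. left. apply (alpha_mono M q1 q2); auto. subst. right. apply (alpha_unique M q2); auto.
  - intros L. destruct (Rle_or_lt q1 q2) as [R|R]; auto. exfalso.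
    eapply lex_lt_not_le. apply (alpha_mono M q2 q1 a2 a1); auto. auto.
Qed.

Lemma val_ext q c d : eqs c d -> val q c = val q d.
Proof. intros E. unfold val. apply Series_ext. intros i. unfold term. rewrite E. auto. Qed.

Lemma nz_shift c n : ~ ends_in_zero c -> ~ ends_in_zero (shiftn n c).
Proof.
  intros Hz [N HN]. apply Hz. exists (n + N)%nat. intros i Hi. specialize (HN (i - n)%nat ltac:(lia)).
  unfold shiftn in HN. rewrite <- HN. f_equal. lia.
Qed.

Lemma tails_le1 M q c : 1 < q <= INR M + 1 -> in_Omega M c -> (forall n, lex_le (shiftn n c) c) ->
  val q c = 1 -> forall n, val q (shiftn n c) <= 1.
Proof.
  intros Hq Hc Hs Hv.
  assert (Step : forall n, 1 < val q (shiftn n c) -> exists n', q * (val q (shiftn n c) - 1) <= val q (shiftn n' c) - 1).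
  { intros n Hn. destruct (Hs n) as [[k [K1 K2]]|E].
    2:{ rewrite (val_ext q _ c E) in Hn. lra. }
    exists (n + k + 1)%nat.
    pose proof (val_shiftn M q (shiftn n c) k ltac:(lra) (shift_Om M c n Hc)) as V1.
    pose proof (val_shiftn M q c k ltac:(lra) Hc) as V2.
    rewrite (val_shift M q (shiftn k (shiftn n c))) in V1 by (auto; try lra; do 2 apply shift_Om; auto).
    rewrite (val_shift M q (shiftn k c)) in V2 by (auto; try lra; apply shift_Om; auto).
    assert (Hps : psum q (shiftn n c) k = psum q c k).
    { clear -K1. induction k. reflexivity. simpl. rewrite IHk. unfold term. rewrite K1; auto.
      intros i Hi; apply K1; lia. }
    rewrite (val_ext q (shiftn 1 (shiftn k (shiftn n c))) (shiftn (n + k + 1) c)) in V1.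
    2:{ intros i. unfold shiftn. f_equal. lia. }
    set (A := val q (shiftn (n + k + 1) c)) in *.
    set (B := val q (shiftn 1 (shiftn k c))) in *.
    assert (B0 : 0 <= B) by (apply (val_nonneg M); try lra; do 2 apply shift_Om; auto).
    assert (Hd : INR (shiftn k (shiftn n c) 0) + 1 <= INR (shiftn k c 0)).
    { unfold shiftn. rewrite !Nat.add_0_r. rewrite <- S_INR. apply le_INR. exact K2. }
    assert (Pk : 0 < q ^ k) by (apply pow_lt; lra).
    assert (Qk : 1 <= q ^ k) by (apply pow_R1_Rle; lra).
    rewrite Hps in V1. rewrite Hv in V2.
    set (a := INR (shiftn k (shiftn n c) 0)) in *. set (b := INR (shiftn k c 0)) in *.
    set (P := psum q c k) in *. set (Q := q ^ k) in *. set (v := val q (shiftn n c)) in *.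
    assert (V1' : v * (q * Q) = P * (q * Q) + a + A) by (rewrite V1; field; lra).
    assert (V2' : 1 * (q * Q) = P * (q * Q) + b + B) by (rewrite V2 at 1; field; lra).
    assert (Xv : (v - 1) * (q * Q) <= A - 1). { replace ((v - 1) * (q * Q)) with (v * (q * Q) - 1 * (q * Q)) by ring. lra. }
    assert (q * (v - 1) <= (v - 1) * (q * Q)). { replace ((v - 1) * (q * Q)) with ((q * (v - 1)) * Q) by ring. rewrite <- (Rmult_1_r (q * (v - 1))) at 1. apply Rmult_le_compat_l; [|lra]. apply Rmult_le_pos; lra. }
    lra. }
  intros n. destruct (Rle_or_lt (val q (shiftn n c)) 1) as [L|L]; auto. exfalso.
  set (e := val q (shiftn n c) - 1).
  assert (G : forall j, exists n', q ^ j * e <= val q (shiftn n' c) - 1).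
  { induction j. exists n. simpl. unfold e. lra.
    destruct IHj as [n' Hn']. assert (0 < q ^ j * e) by (apply Rmult_lt_0_compat; [apply pow_lt|unfold e]; lra).
    destruct (Step n' ltac:(lra)) as [n'' Hn'']. exists n''. simpl. nra. }
  destruct (pow_unbounded q e (INR M / (q - 1)) ltac:(lra) ltac:(unfold e; lra)) as [j Hj].
  destruct (G j) as [n' Hn'].
  pose proof (val_bound M q (shiftn n' c) ltac:(lra) (shift_Om M c n' Hc)).
  assert (0 <= INR M / (q - 1)) by (apply Rdiv_le_0_compat; [apply pos_INR|lra]).
  lra.
Qed.

Lemma parry M q c : 1 < q <= INR M + 1 -> in_Omega M c -> ~ ends_in_zero c ->
  (forall n, lex_le (shiftn n c) c) -> val q c = 1 -> is_alpha M q c.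
Proof.
  intros Hq Hc Hz Hs Hv.
  assert (T := tails_le1 M q c Hq Hc Hs Hv).
  assert (E : eqs c (dig M q 1)).
  { apply lex_le_antisym. apply (dig_max M q 1 c); auto; lra.
    apply not_lt_le. intros [n [K1 K2]].
    set (d := dig M q 1) in *.
    assert (Hd : (d n <= M)%nat) by apply dig_Om.
    pose proof (val_shiftn M q c n ltac:(lra) Hc) as V1.
    pose proof (val_dig M q 1 Hq ltac:(lra)) as Vd.
    pose proof (val_shiftn M q d n ltac:(lra) (dig_Om M q 1)) as V2. fold d in Vd.
    rewrite (val_shift M q (shiftn n c)) in V1 by (auto; try lra; apply shift_Om; auto).
    rewrite (val_shift M q (shiftn n d)) in V2 by (auto; try lra; apply shift_Om; apply dig_Om).
    assert (Hps : psum q c n = psum q d n).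
    { clear -K1. induction n. reflexivity. simpl. rewrite IHn. unfold term. rewrite K1; auto.
      intros i Hi; apply K1; lia. }
    assert (T1 : val q (shiftn 1 (shiftn n c)) <= 1).
    { rewrite (val_ext q _ (shiftn (n + 1) c)). apply T. intros i; unfold shiftn; f_equal; lia. }
    assert (P1 : 0 < val q (shiftn 1 (shiftn n d))).
    { apply (val_pos M). lra. do 2 apply shift_Om. apply dig_Om. do 2 apply nz_shift. apply dig_nz; auto; lra. }
    assert (Hx : INR (shiftn n c 0) + 1 <= INR (shiftn n d 0)).
    { unfold shiftn. rewrite !Nat.add_0_r. rewrite <- S_INR. apply le_INR. exact K2. }
    rewrite Hps in V1.
    set (a := INR (shiftn n c 0)) in *. set (b := INR (shiftn n d 0)) in *.
    set (P := psum q d n) in *. set (Q := q ^ n) in *.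
    assert (0 < Q) by (apply pow_lt; lra).
    assert (V1' : val q c * (q * Q) = P * (q * Q) + a + val q (shiftn 1 (shiftn n c))) by (rewrite V1; field; lra).
    assert (V2' : val q d * (q * Q) = P * (q * Q) + b + val q (shiftn 1 (shiftn n d))) by (rewrite V2 at 1; field; lra).
    rewrite Hv in V1'. rewrite Vd in V2'. lra. }
  assert (c = dig M q 1) by (apply functional_extensionality; exact E).
  rewrite H. apply alpha_dig; auto.
Qed.

Lemma pow_upper x N : 0 <= x -> INR N * x <= 1 -> (1 + x) ^ N * (1 - INR N * x) <= 1.
Proof.
  intros Hx. induction N; intros HN. simpl. lra.
  rewrite S_INR in *. assert (INR N * x <= 1) by (pose proof (pos_INR N); nra).
  specialize (IHN H). simpl.
  assert (0 <= (1 + x) ^ N) by (apply pow_le; lra).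
  assert ((1 + x) * (1 - (INR N + 1) * x) <= 1 - INR N * x) by (pose proof (pos_INR N); nra).
  replace ((1 + x) * (1 + x) ^ N * (1 - (INR N + 1) * x)) with ((1 + x) ^ N * ((1 + x) * (1 - (INR N + 1) * x))) by ring.
  eapply Rle_trans; [|exact IHN]. apply Rmult_le_compat_l; auto.
Qed.

Lemma psum_mono q c n m : 0 < q -> (n <= m)%nat -> psum q c n <= psum q c m.
Proof.
  intros Hq H. induction H. lra. simpl. pose proof (term_nonneg q c m Hq). lra.
Qed.

Lemma val_big M c : in_Omega M c -> ~ ends_in_zero c -> exists q1, 1 < q1 /\ 1 < val q1 c.
Proof.
  intros Hc Hz. destruct (nz_pos c Hz 0) as [i1 [_ H1]]. destruct (nz_pos c Hz (S i1)) as [i2 [L2 H2]].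
  set (N := S i2). set (x := / (4 * INR N)).
  assert (HN : 0 < INR N) by (apply lt_0_INR; unfold N; lia).
  assert (Hx : 0 < x) by (unfold x; apply Rinv_0_lt_compat; lra).
  assert (HNx : INR N * x = / 4) by (unfold x; field; lra).
  exists (1 + x). split. lra.
  pose proof (pow_upper x N ltac:(lra) ltac:(lra)) as PU. rewrite HNx in PU.
  assert (PN : 0 < (1 + x) ^ N) by (apply pow_lt; lra).
  assert (tb : forall i, (0 < c i)%nat -> (S i <= N)%nat -> / (1 + x) ^ N <= term (1 + x) c i).
  { intros i Hi HiN. unfold term. unfold Rdiv.
    assert (1 <= INR (c i)) by (apply (le_INR 1); lia).
    assert (0 < (1 + x) ^ S i) by (apply pow_lt; lra).
    assert ((1 + x) ^ S i <= (1 + x) ^ N) by (apply Rle_pow; [lra|auto]).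
    apply Rle_trans with (1 * / (1 + x) ^ S i). rewrite Rmult_1_l. apply Rinv_le_contravar; auto.
    apply Rmult_le_compat_r; auto. left; apply Rinv_0_lt_compat; auto. }
  eapply Rlt_le_trans; [|apply (val_ge_psum M (1 + x) c N); auto; lra].
  change (psum (1 + x) c N) with (psum (1 + x) c i2 + term (1 + x) c i2).
  assert (psum (1 + x) c (S i1) <= psum (1 + x) c i2) by (apply psum_mono; [lra|lia]).
  simpl in H. pose proof (psum_nonneg (1 + x) c i1 ltac:(lra)).
  pose proof (tb i1 H1 ltac:(unfold N; lia)). pose proof (tb i2 H2 ltac:(unfold N; lia)).
  assert (1 < 2 * / (1 + x) ^ N).
  { apply Rmult_lt_reg_r with ((1 + x) ^ N); auto. rewrite Rmult_assoc, Rinv_l by lra. lra. }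
  lra.
Qed.

Definition coef (c : nat -> nat) (n : nat) : R := match n with O => 0 | S k => INR (c k) end.

Lemma F_val c x : 0 < x -> PSeries (coef c) x = val (/ x) c.
Proof.
  intros Hx. unfold PSeries, val. rewrite Series_incr_1_aux by (simpl; ring).
  apply Series_ext. intros k. unfold term. simpl coef. rewrite pow_inv. field.
  all: try (apply pow_nonzero); lra.
Qed.

Lemma rad M c : in_Omega M c -> forall x, Rabs x < 1 -> Rbar_lt (Rabs x) (CV_radius (coef c)).
Proof.
  intros Hc x Hx. set (r := (Rabs x + 1) / 2).
  assert (Hr : 0 <= r < 1) by (unfold r; pose proof (Rabs_pos x); lra).
  assert (D : CV_disk (coef c) r).
  { unfold CV_disk.
    apply (@ex_series_le R_AbsRing R_CompleteNormedModule) with (fun n => INR M * r ^ n).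
    - intros n. change (norm (Rabs (coef c n * r ^ n))) with (Rabs (Rabs (coef c n * r ^ n))).
      rewrite Rabs_Rabsolu. rewrite Rabs_mult. rewrite (Rabs_pos_eq (r ^ n)) by (apply pow_le; lra).
      apply Rmult_le_compat_r. apply pow_le; lra.
      destruct n; simpl. rewrite Rabs_R0. apply pos_INR. rewrite Rabs_pos_eq by apply pos_INR. apply le_INR, Hc.
    - apply (ex_series_ext (fun i => scal (INR M) (r ^ i))). intros n. reflexivity.
      apply (ex_series_scal_l (K:=R_AbsRing) (V:=R_NormedModule)). apply ex_series_geom.
      rewrite Rabs_pos_eq; lra. }
  destruct (Lub_Rbar_correct (CV_disk (coef c))) as [ub _].
  specialize (ub r D). unfold CV_radius. destruct (Lub_Rbar (CV_disk (coef c))); simpl in *; auto.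
  unfold r in ub. lra.
Qed.

Lemma exists_q M c : (1 <= M)%nat -> in_Omega M c -> ~ ends_in_zero c ->
  exists q, 1 < q <= INR M + 1 /\ val q c = 1.
Proof.
  intros HM Hc Hz.
  assert (HM' : 1 <= INR M) by (apply (le_INR 1); auto).
  assert (B : val (INR M + 1) c <= 1).
  { eapply Rle_trans. apply (val_bound M); auto; lra. right. field. lra. }
  destruct B as [B|B]. 2:{ exists (INR M + 1). split; [lra|auto]. }
  destruct (val_big M c Hc Hz) as [q1 [Q1 V1]].
  assert (Q1' : q1 < INR M + 1).
  { destruct (Rlt_or_le q1 (INR M + 1)); auto. pose proof (val_le_base M (INR M + 1) q1 c ltac:(lra) H Hc). lra. }
  set (f := fun x => PSeries (coef c) x - 1).
  assert (X : / (INR M + 1) < / q1) by (apply Rinv_lt_contravar; nra).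
  assert (X0 : 0 < / (INR M + 1)) by (apply Rinv_0_lt_compat; lra).
  assert (X1 : / q1 < 1) by (apply inv_lt_1; auto).
  destruct (Ranalysis5.IVT_interv f (/ (INR M + 1)) (/ q1)) as [z [Hz1 Hz2]].
  - intros a Ha. unfold f. apply continuity_pt_minus. apply PSeries_continuity. apply (rad M); auto.
    rewrite Rabs_pos_eq; lra. apply continuity_pt_const. intros u v; auto.
  - auto.
  - unfold f. rewrite F_val by lra. rewrite Rinv_inv. lra.
  - unfold f. rewrite F_val by (apply Rinv_0_lt_compat; lra). rewrite Rinv_inv. lra.
  - exists (/ z). unfold f in Hz2. rewrite F_val in Hz2 by lra. split; [|lra].
    split. assert (z < 1) by lra. rewrite <- Rinv_1. apply Rinv_lt_contravar; lra.
    rewrite <- (Rinv_inv (INR M + 1)). apply Rinv_le_contravar; lra.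
Qed.

Lemma alpha_exists M c : (1 <= M)%nat -> in_Omega M c -> ~ ends_in_zero c ->
  (forall n, lex_le (shiftn n c) c) -> exists q, is_alpha M q c.
Proof.
  intros HM Hc Hz Hs. destruct (exists_q M c HM Hc Hz) as [q [Hq Hv]].
  exists q. apply parry; auto.
Qed.

Theorem lemma2p18 (M : nat) (HM : (1 <= M)%nat) (qG q : R)
  (HqG : is_alpha M qG (qG_seq M)) (Hq : qG <= q <= INR M + 1)
  (a : nat -> nat) (Ha : is_alpha M q a) :
  irreducible M a <->
  (forall b, fundamental M b ->
     forall qL qR, is_alpha M qL (periodic b) ->
       is_alpha M qR (word_then_periodic (wplus b) (wflip M b)) ->
       ~ (qL < q <= qR)).
Proof.
  assert (HaO : in_Omega M a) by (destruct Ha as [_ [X _]]; auto).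
  assert (A1 := alpha_shift M q a Ha).
  assert (Hg : lex_le (qG_seq M) a) by (apply (alpha_le_iff M qG q); auto; lra).
  split.
  - intros Hirr b Hf qL qR HL HR [H1 H2].
    apply (comb_forward M a b HaO A1 Hirr Hf).
    apply (alpha_lt_iff M qL q); auto. apply (alpha_le_iff M q qR); auto.
  - intros H. apply NNPP. intros Hn.
    destruct (reduce_to_j M a HM HaO A1 Hg Hn) as [j [Hj [Haj [HV LT]]]].
    destruct (from_j M a j HM HaO A1 Hj Haj HV LT) as [Fund [Lc [Lt [cO [cZ [cS [tO [tZ tS]]]]]]]].
    destruct (alpha_exists M _ HM cO cZ cS) as [qL HL].
    destruct (alpha_exists M _ HM tO tZ tS) as [qR HR].
    apply (H _ Fund qL qR HL HR). split.
    apply (alpha_lt_iff M qL q _ a HL Ha); auto. apply (alpha_le_iff M q qR a _ Ha HR); auto.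
Qed.
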